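(* Let $0<\alpha\le2$, $j\ne0$, $V\in C^2(\mathbb{T})$, and let $G\in C^2(\mathbb{T})$ satisfy (M). Let $(G_n)_{n\in\mathbb{N}}\subset C^2(\mathbb{T})$ with $\|G_n-G\|_{C^2(\mathbb{T})}\to0$, and suppose that for each $n$ problem (P) with kernel $G_n$ has a solution $(m_n,\overline{H}_n)$. Then there exists $(m,\overline{H})\in C^2(\mathbb{T})\times\mathbb{R}$ such that $\|m_n-m\|_{C^2(\mathbb{T})}\to0$ and $\overline{H}_n\to\overline{H}$ along the whole sequence, and $(m,\overline{H})$ solves problem (P) with kernel $G$.
   Context: $\mathbb{T}=\mathbb{R}/\mathbb{Z}$. Problem (P) with kernel $K\in C^2(\mathbb{T})$: find $(m,\overline{H})\in C(\mathbb{T})\times\mathbb{R}$ with $m>0$ on $\mathbb{T}$, $\int_{\mathbb{T}}m=1$, and $\frac{j^2}{2m(x)^\alpha}+V(x)=\int_{\mathbb{T}}K(x-y)m(y)\,dy+\overline{H}$ for all $x\in\mathbb{T}$. Condition (M): $\int_{\mathbb{T}^2}G(x-y)f(x)f(y)\,dx\,dy\ge0$ for all $f\in C(\mathbb{T})$. *)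

(* Defs.v *)
From Stdlib Require Import Reals.
Open Scope R_scope.

(* Functions on T = R/Z are represented as 1-periodic functions R -> R. *)
Definition periodic1 (f : R -> R) : Prop := forall x, f (x + 1) = f x.

Definition CT (f : R -> R) : Prop := periodic1 f /\ continuity f.

Definition C2T_with (f f1 f2 : R -> R) : Prop :=
  periodic1 f /\
  (forall x, derivable_pt_lim f x (f1 x)) /\
  (forall x, derivable_pt_lim f1 x (f2 x)) /\
  continuity f2.

Definition C2T (f : R -> R) : Prop := exists f1 f2, C2T_with f f1 f2.

Definition is_integral (f : R -> R) (a b v : R) : Prop :=
  exists pr : Riemann_integrable f a b, RiemannInt pr = v.

Definition unif_cv (fn : nat -> R -> R) (f : R -> R) : Prop :=
  forall eps, 0 < eps -> exists N, forall n x, (n >= N)%nat -> Rabs (fn n x - f x) <= eps.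

(* || f_n - f ||_{C^2(T)} -> 0, where ||g||_{C^2} = sup|g| + sup|g'| + sup|g''|. *)
Definition C2_cv (fn : nat -> R -> R) (f : R -> R) : Prop :=
  exists (fn1 fn2 : nat -> R -> R) (f1 f2 : R -> R),
    (forall n, C2T_with (fn n) (fn1 n) (fn2 n)) /\
    C2T_with f f1 f2 /\
    unif_cv fn f /\ unif_cv fn1 f1 /\ unif_cv fn2 f2.

(* Condition (M): int_{T^2} G(x-y) f(x) f(y) dx dy >= 0 for all f in C(T),
   the double integral written as the iterated integral
   int_0^1 f(x) (int_0^1 G(x-y) f(y) dy) dx. *)
Definition condM (G : R -> R) : Prop :=
  forall f : R -> R, CT f ->
  forall (g : R -> R) (I : R),
    (forall x, is_integral (fun y => G (x - y) * f y) 0 1 (g x)) ->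
    is_integral (fun x => f x * g x) 0 1 I ->
    0 <= I.

Definition solvesP (alpha j : R) (V K m : R -> R) (Hbar : R) : Prop :=
  CT m /\ (forall x, 0 < m x) /\ is_integral m 0 1 1 /\
  forall x, exists c : R,
    is_integral (fun y => K (x - y) * m y) 0 1 c /\
    j ^ 2 / (2 * Rpower (m x) alpha) + V x = c + Hbar.

(* Main.v *)
Require Import Defs.
From Stdlib Require Import Reals Lra Lia ZArith.
From Coquelicot Require Import Coquelicot.
Open Scope R_scope.


Lemma per_nat f : periodic1 f -> forall n x, f (x + INR n) = f x.
Proof.
  intros Hp n; induction n as [|n IH]; intro x.
  - simpl; f_equal; ring.
  - rewrite S_INR. replace (x + (INR n + 1)) with ((x + INR n) + 1) by ring.
    rewrite Hp; apply IH.
Qed.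

Lemma per_nat_m f : periodic1 f -> forall n x, f (x - INR n) = f x.
Proof.
  intros Hp n x. rewrite <- (per_nat f Hp n (x - INR n)). f_equal; ring.
Qed.

Lemma per_Z f : periodic1 f -> forall z x, f (x + IZR z) = f x.
Proof.
  intros Hp z x. destruct (Z_le_gt_dec 0 z) as [h|h].
  - rewrite <- (Z2Nat.id z h), <- INR_IZR_INZ. apply per_nat; auto.
  - assert (h' : (0 <= - z)%Z) by lia.
    replace (IZR z) with (- IZR (- z)) by (rewrite opp_IZR; ring).
    rewrite <- (Z2Nat.id (- z) h'), <- INR_IZR_INZ.
    apply per_nat_m; auto.
Qed.

Lemma per_reduce f : periodic1 f -> forall x, exists y, 0 <= y <= 1 /\ f x = f y.
Proof.
  intros Hp x. destruct (base_Int_part x) as [h1 h2].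
  exists (x + IZR (- Int_part x)). split.
  - rewrite opp_IZR; lra.
  - rewrite per_Z; auto.
Qed.

Lemma cont_iff f x : continuity_pt f x <-> continuous f x.
Proof. apply continuity_pt_filterlim. Qed.

Lemma per_bound f : periodic1 f -> continuity f -> exists B, 0 <= B /\ forall x, Rabs (f x) <= B.
Proof.
  intros Hp Hc.
  destruct (continuity_ab_maj (fun x => Rabs (f x)) 0 1) as [M [HM _]]; [lra| |].
  - intros c _. apply (continuity_pt_comp f Rabs). apply Hc. apply Rcontinuity_abs.
  - exists (Rabs (f M)). split; [apply Rabs_pos|].
    intro x. destruct (per_reduce f Hp x) as [y [Hy ->]]. apply HM; auto.
Qed.

Lemma per_min f : periodic1 f -> continuity f -> exists x0, forall x, f x0 <= f x.
Proof.
  intros Hp Hc.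
  destruct (continuity_ab_min f 0 1) as [M [HM _]]; [lra| intros; apply Hc |].
  exists M. intro x. destruct (per_reduce f Hp x) as [y [Hy ->]]. apply HM; auto.
Qed.

Lemma deriv_shift1 f x l : periodic1 f -> derivable_pt_lim f (x + 1) l -> derivable_pt_lim f x l.
Proof.
  intros Hp H eps He. destruct (H eps He) as [d Hd]. exists d. intros h Hh Hhd.
  specialize (Hd h Hh Hhd). replace (x + 1 + h) with ((x + h) + 1) in Hd by ring.
  rewrite !Hp in Hd. exact Hd.
Qed.

Lemma deriv_periodic f f1 : periodic1 f -> (forall x, derivable_pt_lim f x (f1 x)) -> periodic1 f1.
Proof.
  intros Hp Hd x. apply (uniqueness_limite f x). apply deriv_shift1; auto. apply Hd.
Qed.

Lemma deriv_cont f f1 : (forall x, derivable_pt_lim f x (f1 x)) -> continuity f.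
Proof.
  intros Hd x. apply derivable_continuous_pt. exists (f1 x). apply Hd.
Qed.

Lemma min_deriv0 f x0 l : (forall x, f x0 <= f x) -> derivable_pt_lim f x0 l -> l = 0.
Proof.
  intros Hm Hd.
  pose (pr := exist (fun l => derivable_pt_lim f x0 l) l Hd : derivable_pt f x0).
  assert (E : derive_pt f x0 pr = l) by reflexivity.
  rewrite <- E. apply (deriv_minimum f (x0 - 1) (x0 + 1)); try lra.
  intros; apply Hm.
Qed.

Ltac rring := match goal with |- ?a = ?b => change (a = b :> R); ring end.

Lemma ex_cont (f : R -> R) a b : continuity f -> ex_RInt f a b.
Proof. intro Hc. apply (@ex_RInt_continuous R_CompleteNormedModule). intros z _. apply cont_iff, Hc. Qed.

Lemma RInt_addR (f g : R -> R) a b : ex_RInt f a b -> ex_RInt g a b ->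
  RInt (fun x => f x + g x) a b = RInt f a b + RInt g a b.
Proof. intros; apply (RInt_plus f g a b); auto. Qed.

Lemma RInt_subR (f g : R -> R) a b : ex_RInt f a b -> ex_RInt g a b ->
  RInt (fun x => f x - g x) a b = RInt f a b - RInt g a b.
Proof. intros; apply (RInt_minus f g a b); auto. Qed.

Lemma RInt_scalR (f : R -> R) c a b : ex_RInt f a b ->
  RInt (fun x => c * f x) a b = c * RInt f a b.
Proof. intros; apply (RInt_scal f a b c); auto. Qed.

Lemma RInt_constR (c : R) a b : RInt (fun _ => c) a b = (b - a) * c.
Proof. rewrite RInt_const. reflexivity. Qed.

Lemma RInt_bound (f g : R -> R) a b : a <= b -> ex_RInt f a b -> ex_RInt g a b ->
  (forall t, a <= t <= b -> Rabs (f t) <= g t) -> Rabs (RInt f a b) <= RInt g a b.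
Proof.
  intros Hab Hf Hg H. apply Rabs_le. split.
  - assert (E: RInt (fun t => - g t) a b = - RInt g a b).
    { rewrite (RInt_ext _ (fun t => (-1) * g t)). rewrite RInt_scalR by auto. rring.
      intros; rring. }
    rewrite <- E. apply RInt_le; auto.
    + apply (ex_RInt_ext (fun t => (-1) * g t)). intros; rring.
      apply (ex_RInt_scal g a b (-1)); auto.
    + intros t Ht. specialize (H t ltac:(lra)). apply Rabs_le_between in H. lra.
  - apply RInt_le; auto. intros t Ht. specialize (H t ltac:(lra)).
    apply Rabs_le_between in H. lra.
Qed.

Lemma ex_RInt_bridge (f : R -> R) a b v : ex_RInt f a b -> RInt f a b = v -> is_integral f a b v.
Proof.
  intros He Hv. exists (ex_RInt_Reals_0 f a b He). rewrite <- RInt_Reals. exact Hv.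
Qed.

Lemma is_integral_RInt (f : R -> R) a b v : is_integral f a b v -> RInt f a b = v.
Proof. intros [pr Hpr]. rewrite (RInt_Reals f a b pr). exact Hpr. Qed.

Lemma is_integral_ex (f : R -> R) a b v : is_integral f a b v -> ex_RInt f a b.
Proof. intros [pr _]. apply ex_RInt_Reals_1; exact pr. Qed.

Lemma cont_shift K x : continuity K -> continuity (fun y => K (x - y)).
Proof.
  intros Hc y. apply (continuity_pt_comp (fun y => x - y) K).
  - apply continuity_pt_minus. apply continuity_pt_const; intros ? ?; auto.
    apply continuity_pt_id.
  - apply Hc.
Qed.

Lemma cont_mul f g : continuity f -> continuity g -> continuity (fun y => f y * g y).
Proof. intros; apply continuity_mult; auto. Qed.

Definition conv (K f : R -> R) (x : R) := RInt (fun y => K (x - y) * f y) 0 1.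

Lemma conv_ex K f x a b : continuity K -> continuity f -> ex_RInt (fun y => K (x - y) * f y) a b.
Proof. intros; apply ex_cont, cont_mul; auto. apply cont_shift; auto. Qed.

Lemma conv_deriv K K1 f x : (forall x, derivable_pt_lim K x (K1 x)) -> continuity K1 ->
  continuity f -> derivable_pt_lim (conv K f) x (conv K1 f x).
Proof.
  intros HK HK1 Hf. apply is_derive_Reals.
  assert (HDer : forall u v, Derive (fun z => K (z - v) * f v) u = K1 (u - v) * f v).
  { intros u v. apply is_derive_unique. apply is_derive_Reals.
    apply derivable_pt_lim_scal_right.
    replace (K1 (u - v)) with (K1 (u - v) * 1) by ring.
    apply (derivable_pt_lim_comp (fun z => z - v) K). 
    replace 1 with (1 - 0) by ring. apply derivable_pt_lim_minus.
    apply derivable_pt_lim_id. apply derivable_pt_lim_const. apply HK. }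
  unfold conv.
  rewrite <- (RInt_ext (fun t => Derive (fun u => K (u - t) * f t) x)).
  2: { intros; apply HDer. }
  apply (is_derive_RInt_param (fun u t => K (u - t) * f t)).
  - apply filter_forall. intros y t _. eexists. apply is_derive_Reals.
    apply derivable_pt_lim_scal_right.
    replace (K1 (y - t)) with (K1 (y - t) * 1) by ring.
    apply (derivable_pt_lim_comp (fun z => z - t) K).
    replace 1 with (1 - 0) by ring. apply derivable_pt_lim_minus.
    apply derivable_pt_lim_id. apply derivable_pt_lim_const. apply HK.
  - intros t _. apply continuity_2d_pt_ext with (f := fun u v => K1 (u - v) * f v).
    { intros; symmetry; apply HDer. }
    apply continuity_2d_pt_mult.
    + apply (continuity_1d_2d_pt_comp K1 (fun u v => u - v)). apply HK1.
      apply continuity_2d_pt_minus. apply continuity_2d_pt_id1. apply continuity_2d_pt_id2.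
    + apply (continuity_1d_2d_pt_comp f (fun u v => v)). apply Hf. apply continuity_2d_pt_id2.
  - apply filter_forall. intros y. apply conv_ex; auto. eapply deriv_cont; eauto.
Qed.

Lemma conv_cont K f : continuity K -> continuity f -> continuity (conv K f).
Proof.
  intros HK Hf x eps He.
  assert (H2 : forall u v, continuity_2d_pt (fun u v => K (u - v) * f v) u v).
  { intros u v. apply continuity_2d_pt_mult.
    + apply (continuity_1d_2d_pt_comp K (fun u v => u - v)). apply HK.
      apply continuity_2d_pt_minus. apply continuity_2d_pt_id1. apply continuity_2d_pt_id2.
    + apply (continuity_1d_2d_pt_comp f (fun u v => v)). apply Hf. apply continuity_2d_pt_id2. }
  destruct (uniform_continuity_2d (fun u v => K (u - v) * f v) (x - 1) (x + 1) 0 1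
     (fun u v _ _ => H2 u v) (mkposreal (eps/2) ltac:(lra))) as [d Hd].
  exists (Rmin d 1). split. { apply Rmin_pos; [apply cond_pos|lra]. }
  intros x' [[_ Hne] Hdist]. unfold conv.
  simpl in Hdist |- *. unfold R_dist in *. rewrite <- RInt_subR by (apply conv_ex; auto).
  apply Rle_lt_trans with (RInt (fun _ => eps/2) 0 1).
  - apply RInt_bound; [lra| | |].
    + apply ex_cont. apply continuity_minus; apply cont_mul; auto; apply cont_shift; auto.
    + apply (@ex_RInt_const R_CompleteNormedModule).
    + intros t Ht. left. apply (Hd x t x' t); try lra.
      * assert (Rmin d 1 <= 1) by apply Rmin_r. apply Rabs_def2 in Hdist. lra.
      * assert (Rmin d 1 <= d) by apply Rmin_l. lra.
      * replace (t - t) with 0 by ring. rewrite Rabs_R0. apply cond_pos.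
  - rewrite RInt_constR. lra.
Qed.

Lemma conv_bound K f B x : continuity K -> continuity f -> (forall y, Rabs (K y) <= B) ->
  (forall y, 0 <= f y) -> Rabs (conv K f x) <= B * RInt f 0 1.
Proof.
  intros HK Hf HB Hp. unfold conv. rewrite <- RInt_scalR by (apply ex_cont; auto).
  apply RInt_bound; [lra|apply conv_ex; auto| |].
  - apply ex_cont. intro; apply continuity_mult; auto. intros ? ? ; apply continuity_pt_const; intros ? ?; auto.
  - intros t _. rewrite Rabs_mult, (Rabs_right (f t)) by (apply Rle_ge, Hp).
    apply Rmult_le_compat_r; auto.
Qed.

Lemma conv_bound2 K f B C x : continuity K -> continuity f -> (forall y, Rabs (K y) <= B) ->
  (forall y, Rabs (f y) <= C) -> Rabs (conv K f x) <= B * C.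
Proof.
  intros HK Hf HB HC. unfold conv.
  apply Rle_trans with (RInt (fun _ => B * C) 0 1).
  - apply RInt_bound; [lra|apply conv_ex; auto|apply (@ex_RInt_const R_CompleteNormedModule)|].
    intros t _. rewrite Rabs_mult. apply Rmult_le_compat; auto; apply Rabs_pos.
  - rewrite RInt_constR. lra.
Qed.

Lemma conv_periodic K f : periodic1 K -> periodic1 (conv K f).
Proof.
  intros Hp x. unfold conv. apply RInt_ext. intros y _.
  replace (x + 1 - y) with ((x - y) + 1) by ring. rewrite Hp. reflexivity.
Qed.

Lemma conv_subK K L f x : continuity K -> continuity L -> continuity f ->
  conv K f x - conv L f x = conv (fun y => K y - L y) f x.
Proof.
  intros HK HL Hf. unfold conv. rewrite <- RInt_subR by (apply conv_ex; auto).
  apply RInt_ext. intros; rring.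
Qed.

Lemma conv_subf K f g x : continuity K -> continuity f -> continuity g ->
  conv K f x - conv K g x = conv K (fun y => f y - g y) x.
Proof.
  intros HK Hf Hg. unfold conv. rewrite <- RInt_subR by (apply conv_ex; auto).
  apply RInt_ext. intros; rring.
Qed.

Lemma Rpower_pos x y : 0 < Rpower x y.
Proof. unfold Rpower; apply exp_pos. Qed.

Lemma rp_deriv F d c x : 0 < F x -> derivable_pt_lim F x d ->
  derivable_pt_lim (fun y => Rpower (F y) c) x (c * Rpower (F x) (c - 1) * d).
Proof.
  intros Hp Hd. replace (c * Rpower (F x) (c - 1) * d) with ((c * Rpower (F x) (c - 1)) * d) by ring.
  change (fun y => Rpower (F y) c) with (comp (fun s => Rpower s c) F).
  apply (derivable_pt_lim_comp F (fun s => Rpower s c)); auto.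
  apply derivable_pt_lim_power; auto.
Qed.

Lemma rp_le_sum w d M c : 0 < d -> d <= w <= M ->
  Rpower w c <= Rpower d c + Rpower M c.
Proof.
  intros Hd Hw. assert (H1 := Rpower_pos d c). assert (H2 := Rpower_pos M c).
  destruct (Rle_dec 0 c) as [Hc|Hc].
  - assert (Rpower w c <= Rpower M c) by (apply Rle_Rpower_l; auto; lra). lra.
  - assert (Rpower w c <= Rpower d c).
    { assert (E1 : Rpower w c = / Rpower w (- c)) by (rewrite <- Rpower_Ropp; f_equal; ring).
      assert (E2 : Rpower d c = / Rpower d (- c)) by (rewrite <- Rpower_Ropp; f_equal; ring).
      rewrite E1, E2.
      apply Rinv_le_contravar. apply Rpower_pos. apply Rle_Rpower_l; lra. }
    lra.
Qed.

Lemma rp_lip u v d M c : 0 < d -> d <= u <= M -> d <= v <= M ->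
  Rabs (Rpower u c - Rpower v c) <= Rabs c * (Rpower d (c - 1) + Rpower M (c - 1)) * Rabs (u - v).
Proof.
  intros Hd Hu Hv.
  destruct (MVT_abs (fun s => Rpower s c) (fun s => c * Rpower s (c - 1)) v u) as [w [Hw Hwi]].
  { intros w Hw. apply derivable_pt_lim_power.
    assert (Rmin v u >= d) by (unfold Rmin; destruct Rle_dec; lra). lra. }
  rewrite Hw. apply Rmult_le_compat_r. apply Rabs_pos.
  rewrite Rabs_mult. apply Rmult_le_compat_l. apply Rabs_pos.
  rewrite Rabs_right by (apply Rle_ge, Rlt_le, Rpower_pos). apply rp_le_sum; auto.
  unfold Rmin, Rmax in Hwi; destruct Rle_dec; lra.
Qed.

Definition phi (A b s : R) := Rpower (A / s) b.

Lemma phi_alt A b (HA : 0 < A) (Hb : 0 < b) s : 0 < s -> phi A b s = Rpower A b * Rpower s (- b).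
Proof.
  intro Hs. unfold phi, Rpower. rewrite <- exp_plus. f_equal.
  unfold Rdiv. rewrite ln_mult, ln_Rinv; auto. ring. apply Rinv_0_lt_compat; auto.
Qed.

Lemma phi_deriv A b (HA : 0 < A) (Hb : 0 < b) s : 0 < s -> derivable_pt_lim (phi A b) s (- b * phi A b s / s).
Proof.
  intro Hs.
  assert (E : forall s, 0 < s -> phi A b s = Rpower A b * Rpower s (- b)) by (intros; apply phi_alt; auto).
  apply (derivable_pt_lim_locally_ext (fun s => Rpower A b * Rpower s (- b)) _ _ (s/2) (2*s)).
  lra. intros y Hy; symmetry; apply E; lra.
  rewrite E by auto.
  replace (- b * (Rpower A b * Rpower s (- b)) / s) with (Rpower A b * (- b * Rpower s (- b - 1))).
  apply derivable_pt_lim_scal. apply derivable_pt_lim_power; auto.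
  unfold Rminus. rewrite Rpower_plus.
  replace (Rpower s (- (1))) with (/ s) by (rewrite Rpower_Ropp, Rpower_1; auto).
  field. lra.
Qed.

Lemma phi_pos A b s : 0 < phi A b s.
Proof. apply Rpower_pos. Qed.

Lemma phi_decr A b (HA : 0 < A) (Hb : 0 < b) u v : 0 < u <= v -> phi A b v <= phi A b u.
Proof.
  intro H. unfold phi. apply Rle_Rpower_l. lra. split.
  apply Rdiv_lt_0_compat; lra. unfold Rdiv. apply Rmult_le_compat_l. lra.
  apply Rinv_le_contravar; lra.
Qed.

Lemma phi_mono A b (HA : 0 < A) (Hb : 0 < b) d M u v : 0 < d -> d <= u <= M -> d <= v <= M ->
  (phi A b u - phi A b v) * (u - v) <= - (b * phi A b M / M) * (u - v) ^ 2 /\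
  Rabs (phi A b u - phi A b v) <= b * phi A b d / d * Rabs (u - v).
Proof.
  intros Hd Hu Hv.
  assert (key : forall u v, d <= u <= M -> d <= v <= M -> u < v ->
    (phi A b u - phi A b v) * (u - v) <= - (b * phi A b M / M) * (u - v) ^ 2 /\
    Rabs (phi A b u - phi A b v) <= b * phi A b d / d * Rabs (u - v)).
  { clear u v Hu Hv. intros u v Hu Hv Huv.
    destruct (MVT_cor2 (phi A b) (fun s => - b * phi A b s / s) u v Huv) as [c [Hc Hci]].
    { intros c Hc. apply phi_deriv; auto; lra. }
    assert (Hpc1 : phi A b M <= phi A b c) by (apply phi_decr; auto; lra).
    assert (Hpc2 : phi A b c <= phi A b d) by (apply phi_decr; auto; lra).
    assert (HM : phi A b M / M <= phi A b c / c).
    { unfold Rdiv. apply Rmult_le_compat; try lra. left; apply phi_pos.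
      left; apply Rinv_0_lt_compat; lra. apply Rinv_le_contravar; lra. }
    assert (Hd' : phi A b c / c <= phi A b d / d).
    { unfold Rdiv. apply Rmult_le_compat; try lra. left; apply phi_pos.
      left; apply Rinv_0_lt_compat; lra. apply Rinv_le_contravar; lra. }
    assert (E : phi A b u - phi A b v = b * (phi A b c / c) * (v - u)).
    { replace (phi A b u - phi A b v) with (- (phi A b v - phi A b u)) by ring. rewrite Hc. field. lra. }
    rewrite E. split.
    - assert (0 <= (v - u)^2) by nra. 
      replace (b * (phi A b c / c) * (v - u) * (u - v)) with (- (b * (phi A b c / c)) * (v - u)^2) by ring.
      replace ((u - v)^2) with ((v - u)^2) by ring.
      apply Rmult_le_compat_r; auto. apply Ropp_le_contravar.
      unfold Rdiv in *. rewrite Rmult_assoc. apply Rmult_le_compat_l; lra.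
    - rewrite Rabs_mult, Rabs_mult, (Rabs_right b), (Rabs_right (phi A b c / c)) by
        (apply Rle_ge; first [lra | apply Rlt_le, Rdiv_lt_0_compat; [apply phi_pos|lra]]).
      rewrite <- Rabs_Ropp, Ropp_minus_distr. unfold Rdiv in *.
      replace (b * phi A b d * / d) with (b * (phi A b d * / d)) by ring. apply Rmult_le_compat_r. apply Rabs_pos.
      apply Rmult_le_compat_l; lra. }
  destruct (Rtotal_order u v) as [Hl|[He|Hg]].
  - apply key; auto.
  - subst. replace (v - v) with 0 by ring. rewrite Rabs_R0. split.
    + replace ((phi A b v - phi A b v) * 0) with 0 by ring. nra.
    + rewrite Rminus_diag, Rabs_R0. lra.
  - destruct (key v u Hv Hu Hg) as [K1 K2]. split.
    + replace ((phi A b u - phi A b v) * (u - v)) with ((phi A b v - phi A b u) * (v - u)) by ring.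
      replace ((u - v)^2) with ((v - u)^2) by ring. auto.
    + rewrite Rabs_minus_sym, (Rabs_minus_sym u). auto.
Qed.

Lemma phi_inv A b (HA : 0 < A) (Hb : 0 < b) m : 0 < m -> phi A b (A / Rpower m (/ b)) = m.
Proof.
  intro Hm. unfold phi. replace (A / (A / Rpower m (/ b))) with (Rpower m (/ b)).
  rewrite Rpower_mult. replace (/ b * b) with 1 by (field; lra). apply Rpower_1; auto.
  field. split. apply Rgt_not_eq, Rpower_pos. lra.
Qed.

Lemma phi_pow A b (HA : 0 < A) (Hb : 0 < b) s : 0 < s -> Rpower (phi A b s) (/ b) = A / s.
Proof.
  intro Hs. unfold phi. rewrite Rpower_mult. replace (b * / b) with 1 by (field; lra).
  apply Rpower_1. apply Rdiv_lt_0_compat; auto.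
Qed.


Lemma per_min01 f : periodic1 f -> continuity f -> exists x0, 0 <= x0 <= 1 /\ forall x, f x0 <= f x.
Proof.
  intros Hp Hc.
  destruct (continuity_ab_min f 0 1) as [M [HM HM1]]; [lra| intros; apply Hc |].
  exists M. split; auto. intro x. destruct (per_reduce f Hp x) as [y [Hy ->]]. apply HM; auto.
Qed.

Lemma taylor2 F F1 F2 K x0 : (forall x, derivable_pt_lim F x (F1 x)) ->
  (forall x, derivable_pt_lim F1 x (F2 x)) -> (forall x, Rabs (F2 x) <= K) ->
  F1 x0 = 0 -> forall x, F x <= F x0 + K * (x - x0) ^ 2.
Proof.
  intros HF HF1 HK H0 x.
  assert (B1 : forall y, Rabs (F1 y) <= K * Rabs (y - x0)).
  { intro y. destruct (MVT_abs F1 F2 x0 y) as [c [Hc _]]. intros; apply HF1.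
    rewrite H0, Rminus_0_r in Hc. rewrite Hc. apply Rmult_le_compat_r. apply Rabs_pos. apply HK. }
  destruct (MVT_abs F F1 x0 x) as [c [Hc Hci]]. intros; apply HF.
  assert (Hcx : Rabs (c - x0) <= Rabs (x - x0)).
  { unfold Rmin, Rmax in Hci. destruct Rle_dec;
    unfold Rabs; destruct Rcase_abs; destruct Rcase_abs; lra. }
  assert (HK0 : 0 <= K) by (apply Rle_trans with (Rabs (F2 x0)); [apply Rabs_pos| apply HK]).
  assert (Rabs (F x - F x0) <= K * (x - x0) ^ 2).
  { rewrite Hc. apply Rle_trans with (K * Rabs (c - x0) * Rabs (x - x0)).
    apply Rmult_le_compat_r. apply Rabs_pos. apply B1.
    replace ((x - x0)^2) with (Rabs (x - x0) * Rabs (x - x0)).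
    rewrite Rmult_assoc. apply Rmult_le_compat_l; auto. apply Rmult_le_compat_r; auto. apply Rabs_pos.
    rewrite <- Rabs_mult. rewrite Rabs_right. ring. apply Rle_ge. apply Rle_0_sqr. }
  apply Rabs_le_between in H. lra.
Qed.

Lemma m_lower A alpha m F : 0 < A -> 0 < alpha <= 2 -> 0 < m -> 0 < F -> F <= A ->
  F = A / Rpower m alpha -> sqrt A / sqrt F <= m.
Proof.
  intros HA Hal Hm HF HFA E.
  assert (E1 : Rpower m alpha = A / F).
  { rewrite E. field. split. apply Rgt_not_eq, Rpower_pos. lra. }
  assert (E2 : m = Rpower (A / F) (/ alpha)).
  { rewrite <- E1, Rpower_mult. replace (alpha * / alpha) with 1 by (field; lra).
    rewrite Rpower_1; auto. }
  rewrite E2, <- sqrt_div_alt by auto. rewrite <- Rpower_sqrt by (apply Rdiv_lt_0_compat; lra).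
  apply Rle_Rpower.
  - apply (Rmult_le_reg_r F); auto. unfold Rdiv. rewrite Rmult_assoc, Rinv_l by lra. lra.
  - apply Rinv_le_contravar; lra.
Qed.

Lemma RInt_sub_le (f : R -> R) a b : continuity f -> (forall x, 0 <= f x) -> 0 <= a -> a <= b -> b <= 1 ->
  RInt f a b <= RInt f 0 1.
Proof.
  intros Hc Hp H0a Hab Hb1.
  rewrite <- (RInt_Chasles f 0 a 1) by (apply ex_cont; auto).
  rewrite <- (RInt_Chasles f a b 1) by (apply ex_cont; auto).
  assert (0 <= RInt f 0 a) by (apply RInt_ge_0; auto; apply ex_cont; auto).
  assert (0 <= RInt f b 1) by (apply RInt_ge_0; auto; apply ex_cont; auto).
  change (RInt f a b <= RInt f 0 a + (RInt f a b + RInt f b 1)). lra.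
Qed.

Lemma ln_int_right c p q x0 tau : 0 < p -> 0 < q -> 0 <= tau ->
  is_RInt (fun x => c / (p + q * (x - x0))) x0 (x0 + tau) (c / q * (ln (p + q * tau) - ln p)).
Proof.
  intros Hp Hq Ht.
  replace (c / q * (ln (p + q * tau) - ln p)) with
    (minus ((fun x => c / q * ln (p + q * (x - x0))) (x0 + tau)) ((fun x => c / q * ln (p + q * (x - x0))) x0)).
  2: { unfold minus, plus, opp; simpl. replace (x0 + tau - x0) with tau by ring.
       replace (x0 - x0) with 0 by ring. replace (p + q * 0) with p by ring. ring. }
  apply (@is_RInt_derive R_CompleteNormedModule (fun x => c / q * ln (p + q * (x - x0))) (fun x => c / (p + q * (x - x0)))).
  - intros x Hx. unfold Rmin, Rmax in Hx; destruct Rle_dec in Hx; try lra.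
    apply is_derive_Reals.
    assert (Hpos : 0 < p + q * (x - x0)) by nra.
    replace (c / (p + q * (x - x0))) with (c / q * (/ (p + q * (x - x0)) * (0 + q * (1 - 0)))) by (field; lra).
    apply derivable_pt_lim_scal.
    apply (derivable_pt_lim_comp (fun x => p + q * (x - x0)) ln).
    + apply derivable_pt_lim_plus. apply derivable_pt_lim_const.
      apply derivable_pt_lim_scal. apply derivable_pt_lim_minus. apply derivable_pt_lim_id. apply derivable_pt_lim_const.
    + apply derivable_pt_lim_ln; auto.
  - intros x Hx. unfold Rmin, Rmax in Hx; destruct Rle_dec in Hx; try lra.
    apply cont_iff. apply continuity_pt_div.
    apply continuity_pt_const; intros ? ?; auto.
    apply continuity_pt_plus. apply continuity_pt_const; intros ? ?; auto.
    apply continuity_pt_scal. apply continuity_pt_minus. apply continuity_pt_id. apply continuity_pt_const; intros ? ?; auto.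
    nra.
Qed.

Lemma ln_int_left c p q x0 tau : 0 < p -> 0 < q -> 0 <= tau ->
  is_RInt (fun x => c / (p + q * (x0 - x))) (x0 - tau) x0 (c / q * (ln (p + q * tau) - ln p)).
Proof.
  intros Hp Hq Ht.
  replace (c / q * (ln (p + q * tau) - ln p)) with
    (minus ((fun x => - (c / q) * ln (p + q * (x0 - x))) x0) ((fun x => - (c / q) * ln (p + q * (x0 - x))) (x0 - tau))).
  2: { unfold minus, plus, opp; simpl. replace (x0 - (x0 - tau)) with tau by ring.
       replace (x0 - x0) with 0 by ring. replace (p + q * 0) with p by ring. ring. }
  apply (@is_RInt_derive R_CompleteNormedModule (fun x => - (c / q) * ln (p + q * (x0 - x))) (fun x => c / (p + q * (x0 - x)))).
  - intros x Hx. unfold Rmin, Rmax in Hx; destruct Rle_dec in Hx; try lra.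
    apply is_derive_Reals.
    assert (Hpos : 0 < p + q * (x0 - x)) by nra.
    replace (c / (p + q * (x0 - x))) with (- (c / q) * (/ (p + q * (x0 - x)) * (0 + q * (0 - 1)))) by (field; lra).
    apply derivable_pt_lim_scal.
    apply (derivable_pt_lim_comp (fun x => p + q * (x0 - x)) ln).
    + apply derivable_pt_lim_plus. apply derivable_pt_lim_const.
      apply derivable_pt_lim_scal. apply derivable_pt_lim_minus. apply derivable_pt_lim_const. apply derivable_pt_lim_id.
    + apply derivable_pt_lim_ln; auto.
  - intros x Hx. unfold Rmin, Rmax in Hx; destruct Rle_dec in Hx; try lra.
    apply cont_iff. apply continuity_pt_div.
    apply continuity_pt_const; intros ? ?; auto.
    apply continuity_pt_plus. apply continuity_pt_const; intros ? ?; auto.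
    apply continuity_pt_scal. apply continuity_pt_minus. apply continuity_pt_const; intros ? ?; auto. apply continuity_pt_id.
    nra.
Qed.

Definition delta0 A K := Rmin (Rmin 1 A / 2)
  (K * (Rmin (1/2) (sqrt (Rmin 1 A / (2 * K)))) ^ 2 / (exp (sqrt K / sqrt A) - 1) ^ 2).

Lemma exp_le_mono x y : x <= y -> exp x <= exp y.
Proof. intro H. destruct (Req_dec x y) as [->|]; [lra|]. left; apply exp_increasing; lra. Qed.

Lemma F_lower A alpha K F F1 F2 m :
  0 < A -> 0 < alpha <= 2 -> 1 <= K ->
  periodic1 F -> (forall x, derivable_pt_lim F x (F1 x)) -> (forall x, derivable_pt_lim F1 x (F2 x)) ->
  (forall x, Rabs (F2 x) <= K) ->
  continuity m -> (forall x, 0 < m x) -> RInt m 0 1 = 1 ->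
  (forall x, F x = A / Rpower (m x) alpha) ->
  forall x, delta0 A K <= F x.
Proof.
  intros HA Hal HK Hp HF HF1 HF2 Hmc Hmp Hm1 HFm.
  assert (HFc : continuity F) by (eapply deriv_cont; eauto).
  assert (HFp : forall x, 0 < F x).
  { intro x; rewrite HFm. apply Rdiv_lt_0_compat; auto. apply Rpower_pos. }
  destruct (per_min01 F Hp HFc) as [x0 [Hx0 Hmin]].
  assert (H10 : F1 x0 = 0) by (eapply min_deriv0; eauto).
  intro x. apply Rle_trans with (F x0); [|apply Hmin].
  set (mu := F x0). assert (Hmu : 0 < mu) by apply HFp.
  set (s0 := Rmin 1 A).
  assert (Hs0 : 0 < s0) by (unfold s0, Rmin; destruct Rle_dec; lra).
  assert (Hs01 : s0 <= 1) by apply Rmin_l.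
  assert (Hs0A : s0 <= A) by apply Rmin_r.
  unfold delta0. fold s0.
  destruct (Rle_dec (s0 / 2) mu) as [Hb|Hb].
  { apply Rle_trans with (s0/2); auto. apply Rmin_l. }
  apply Rle_trans with (K * (Rmin (1/2) (sqrt (s0 / (2 * K)))) ^ 2 / (exp (sqrt K / sqrt A) - 1) ^ 2);
    [apply Rmin_r|].
  set (tau := Rmin (1/2) (sqrt (s0 / (2 * K)))).
  assert (Hsq : 0 < sqrt (s0 / (2 * K))) by (apply sqrt_lt_R0; apply Rdiv_lt_0_compat; lra).
  assert (Htau : 0 < tau) by (unfold tau, Rmin; destruct Rle_dec; lra).
  assert (Htau2 : tau <= 1/2) by apply Rmin_l.
  assert (HKtau : K * tau ^ 2 <= s0 / 2).
  { assert (tau <= sqrt (s0 / (2 * K))) by apply Rmin_r.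
    assert (tau ^ 2 <= s0 / (2 * K)).
    { rewrite <- (sqrt_sqrt (s0 / (2 * K))) by (left; apply Rdiv_lt_0_compat; lra). nra. }
    apply Rmult_le_compat_l with (r := K) in H0; [|lra].
    replace (K * (s0 / (2 * K))) with (s0 / 2) in H0 by (field; lra). lra. }
  set (c0 := sqrt A). set (p := sqrt mu). set (q := sqrt K).
  assert (Hc0 : 0 < c0) by (apply sqrt_lt_R0; auto).
  assert (Hp0 : 0 < p) by (apply sqrt_lt_R0; auto).
  assert (Hq0 : 0 < q) by (apply sqrt_lt_R0; lra).
  assert (key : forall x, Rabs (x - x0) <= tau -> c0 / (p + q * Rabs (x - x0)) <= m x).
  { intros y Hy. set (d := Rabs (y - x0)).
    assert (Hd0 : 0 <= d) by apply Rabs_pos.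
    assert (HFy : F y <= mu + K * d ^ 2).
    { unfold d. rewrite pow2_abs. apply (taylor2 F F1 F2 K x0); auto. }
    change (d <= tau) in Hy. assert (Hd2 : K * d ^ 2 <= K * tau ^ 2) by (apply Rmult_le_compat_l; [lra| apply pow_incr; lra]).
    assert (HFs : F y <= A) by lra.
    apply Rle_trans with (sqrt A / sqrt (F y)).
    - unfold Rdiv. apply Rmult_le_compat_l; [apply sqrt_pos|]. apply Rinv_le_contravar.
      apply sqrt_lt_R0; auto.
      apply Rle_trans with (sqrt (mu + K * d ^ 2)).
      + apply sqrt_le_1; try lra. left; auto.
        apply Rplus_le_le_0_compat; [lra| apply Rmult_le_pos; [lra| apply pow2_ge_0]].
      + assert (Hpq : 0 <= p + q * d) by (apply Rplus_le_le_0_compat; [lra| apply Rmult_le_pos; lra]).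
        rewrite <- (sqrt_square (p + q * d)) by exact Hpq. apply sqrt_le_1.
        apply Rplus_le_le_0_compat; [lra| apply Rmult_le_pos; [lra| apply pow2_ge_0]].
        apply Rmult_le_pos; exact Hpq.
        unfold p, q. 
        replace ((sqrt mu + sqrt K * d) * (sqrt mu + sqrt K * d)) with
          (sqrt mu * sqrt mu + sqrt K * sqrt K * d ^ 2 + 2 * sqrt mu * sqrt K * d) by ring.
        rewrite !sqrt_sqrt by lra. assert (0 <= sqrt mu * sqrt K * d) by (apply Rmult_le_pos; [apply Rmult_le_pos; apply sqrt_pos| lra]). lra.
    - apply (m_lower A alpha); auto. }
  assert (Hint : c0 / q * (ln (p + q * tau) - ln p) <= 1).
  { rewrite <- Hm1. destruct (Rle_dec x0 (1/2)) as [Hl|Hl].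
    - assert (HI := ln_int_right c0 p q x0 tau Hp0 Hq0 (Rlt_le _ _ Htau)).
      rewrite <- (is_RInt_unique _ _ _ _ HI).
      apply Rle_trans with (RInt m x0 (x0 + tau)).
      + apply RInt_le; try lra. eexists; eauto. apply ex_cont; auto.
        intros y Hy. rewrite <- (Rabs_right (y - x0)) by lra. apply key.
        rewrite Rabs_right by lra. lra.
      + apply RInt_sub_le; auto; try lra. intros; left; auto.
    - assert (HI := ln_int_left c0 p q x0 tau Hp0 Hq0 (Rlt_le _ _ Htau)).
      rewrite <- (is_RInt_unique _ _ _ _ HI).
      apply Rle_trans with (RInt m (x0 - tau) x0).
      + apply RInt_le; try lra. eexists; eauto. apply ex_cont; auto.
        intros y Hy. replace (x0 - y) with (Rabs (y - x0)) by (rewrite Rabs_left by lra; ring).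
        apply key. rewrite Rabs_left by lra. lra.
      + apply RInt_sub_le; auto; try lra. intros; left; auto. }
  assert (Hr : ln (p + q * tau) - ln p <= q / c0).
  { apply (Rmult_le_reg_l (c0 / q)). apply Rdiv_lt_0_compat; auto.
    replace (c0 / q * (q / c0)) with 1 by (field; lra). auto. }
  assert (HE : (p + q * tau) / p <= exp (sqrt K / sqrt A)).
  { fold q c0. assert (Hpq : 0 < p + q * tau) by (assert (0 < q * tau) by (apply Rmult_lt_0_compat; lra); lra).
    rewrite <- (exp_ln ((p + q * tau) / p)) by (apply Rdiv_lt_0_compat; lra).
    apply exp_le_mono. unfold Rdiv at 1.
    rewrite ln_mult by (try apply Rinv_0_lt_compat; lra). rewrite ln_Rinv by lra. lra. }
  set (E := exp (sqrt K / sqrt A)) in *.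
  assert (HE2 : q * tau <= (E - 1) * p).
  { replace ((p + q * tau) / p) with (1 + q * tau / p) in HE by (field; lra).
    apply (Rmult_le_compat_r p) in HE; [|lra].
    replace ((1 + q * tau / p) * p) with (p + q * tau) in HE by (field; lra). lra. }
  assert (HE1 : 0 < E - 1) by (assert (0 < q * tau) by nra; nra).
  assert (HK2 : K * tau ^ 2 <= (E - 1) ^ 2 * mu).
  { replace (K * tau ^ 2) with ((q * tau) ^ 2) by (unfold q; rewrite Rpow_mult_distr, pow2_sqrt; lra).
    replace mu with (p ^ 2) by (unfold p; rewrite pow2_sqrt; lra).
    replace ((E - 1) ^ 2 * p ^ 2) with (((E - 1) * p) ^ 2) by ring.
    apply pow_incr. split; [nra|auto]. }
  apply (Rmult_le_reg_r ((E - 1) ^ 2)). nra.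
  unfold Rdiv. rewrite Rmult_assoc, Rinv_l by nra. lra.
Qed.

Lemma C2_cont1 f f1 f2 : C2T_with f f1 f2 -> continuity f1.
Proof. intros (_ & _ & H & _). eapply deriv_cont; eauto. Qed.

Lemma C2_cont0 f f1 f2 : C2T_with f f1 f2 -> continuity f.
Proof. intros (_ & H & _). eapply deriv_cont; eauto. Qed.

Lemma sol_facts alpha j V V1 V2 K K1 K2 m H :
  0 < alpha -> j <> 0 -> C2T_with V V1 V2 -> C2T_with K K1 K2 -> solvesP alpha j V K m H ->
  continuity m /\ periodic1 m /\ (forall x, 0 < m x) /\ RInt m 0 1 = 1 /\
  (forall x, conv K m x + H - V x = (j ^ 2 / 2) / Rpower (m x) alpha) /\
  C2T_with (fun x => conv K m x + H - V x) (fun x => conv K1 m x - V1 x) (fun x => conv K2 m x - V2 x).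
Proof.
  intros Hal Hj HV HK [[Hmp Hmc] [Hpos [Hint Heq]]].
  assert (HKc1 := C2_cont1 _ _ _ HK). assert (HKc := C2_cont0 _ _ _ HK).
  destruct HK as (HKp & HKd & HKd1 & HKc2).
  destruct HV as (HVp & HVd & HVd1 & HVc2).
  repeat split; auto.
  - apply is_integral_RInt; auto.
  - intro x. destruct (Heq x) as [c [Hc E]]. apply is_integral_RInt in Hc.
    unfold conv. rewrite Hc.
    assert (0 < Rpower (m x) alpha) by apply Rpower_pos.
    replace c with (j ^ 2 / (2 * Rpower (m x) alpha) + V x - H) by lra. field. lra.
  - intro x. rewrite (conv_periodic K m HKp x), HVp. ring.
  - intro x. apply derivable_pt_lim_minus. 
    replace (conv K1 m x) with (conv K1 m x + 0) by ring.
    apply derivable_pt_lim_plus. apply conv_deriv; auto. apply derivable_pt_lim_const. apply HVd.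
  - intro x. apply derivable_pt_lim_minus. apply conv_deriv; auto. apply HVd1.
  - apply continuity_minus; auto. apply conv_cont; auto.
Qed.

Lemma Rpower_1_base y : Rpower 1 y = 1.
Proof. unfold Rpower. rewrite ln_1, Rmult_0_r. apply exp_0. Qed.

Lemma F_upper A alpha K m H V B BV :
  0 < A -> 0 < alpha -> continuity m -> continuity K -> (forall x, 0 < m x) -> RInt m 0 1 = 1 ->
  (forall x, conv K m x + H - V x = A / Rpower (m x) alpha) ->
  (forall y, Rabs (K y) <= B) -> (forall y, Rabs (V y) <= BV) ->
  forall x, conv K m x + H - V x <= A + 2 * B + 2 * BV.
Proof.
  intros HA Hal Hmc HKc Hmp Hm1 Heq HB HBV x.
  assert (Hx1 : exists x1, 1 <= m x1).
  { destruct (Rle_dec 1 (m 0)) as [h|h]; [exists 0; auto|].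
    apply Classical_Prop.NNPP. intro Hn.
    assert (Hlt : RInt m 0 1 < RInt (fun _ => 1) 0 1).
    { apply RInt_lt; try lra. intros; apply cont_iff; apply continuity_const; intros ? ?; auto.
      intros; apply cont_iff; auto. intros y _. apply Rnot_le_lt. intro. apply Hn. exists y; auto. }
    rewrite RInt_constR, Hm1 in Hlt. lra. }
  destruct Hx1 as [x1 Hx1].
  assert (HB1 : Rabs (conv K m x1) <= B) by (rewrite <- (Rmult_1_r B), <- Hm1; apply conv_bound; auto; intros; left; auto).
  assert (HBx : Rabs (conv K m x) <= B) by (rewrite <- (Rmult_1_r B), <- Hm1; apply conv_bound; auto; intros; left; auto).
  assert (HP : 1 <= Rpower (m x1) alpha).
  { rewrite <- (Rpower_1_base alpha). apply Rle_Rpower_l; lra. }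
  assert (HF1 : A / Rpower (m x1) alpha <= A).
  { unfold Rdiv. rewrite <- (Rmult_1_r A) at 2. apply Rmult_le_compat_l; [lra|].
    rewrite <- Rinv_1. apply Rinv_le_contravar; lra. }
  rewrite <- Heq in HF1.
  specialize (HBV x) as h1. specialize (HBV x1) as h2.
  apply Rabs_le_between in HB1. apply Rabs_le_between in HBx.
  apply Rabs_le_between in h1. apply Rabs_le_between in h2. lra.
Qed.

Definition Lc A b dl := b * phi A b dl / dl.
Definition kc A b M := b * phi A b M / M.
Definition rhoc A b BG dl M S eta :=
  BG * ((Lc A b dl) ^ 2 / kc A b M * S * (Lc A b dl * (M - dl)) / (2 * eta) + eta / 2) + S.

Lemma cont_const c : continuity (fun _ => c).
Proof. intros x; apply continuity_const; intros ? ?; auto. Qed.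

Lemma cont_pow2 f : continuity f -> continuity (fun x => f x ^ 2).
Proof. intro H. intro x. apply (continuity_pt_ext (fun x => f x * f x)). intros; ring. apply cont_mul; auto. Qed.

Lemma cauchy_core A b G BG V m1 m2 K1 K2 H1 H2 e1 e2 dl M eta :
  0 < A -> 0 < b -> continuity G -> condM G -> 0 <= BG -> (forall y, Rabs (G y) <= BG) ->
  continuity V -> continuity m1 -> continuity m2 -> periodic1 m1 -> periodic1 m2 ->
  RInt m1 0 1 = 1 -> RInt m2 0 1 = 1 -> (forall x, 0 < m1 x) -> (forall x, 0 < m2 x) ->
  continuity K1 -> continuity K2 ->
  (forall x, m1 x = phi A b (conv K1 m1 x + H1 - V x)) ->
  (forall x, m2 x = phi A b (conv K2 m2 x + H2 - V x)) ->
  0 < dl -> (forall x, dl <= conv K1 m1 x + H1 - V x <= M) ->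
  (forall x, dl <= conv K2 m2 x + H2 - V x <= M) ->
  (forall y, Rabs (K1 y - G y) <= e1) -> (forall y, Rabs (K2 y - G y) <= e2) -> 0 < eta ->
  Rabs (H1 - H2) <= rhoc A b BG dl M (e1 + e2) eta /\
  forall x, Rabs (m1 x - m2 x) <= Lc A b dl * (2 * rhoc A b BG dl M (e1 + e2) eta).
Proof.
  intros HA Hb HGc HM HBG HGB HVc Hm1c Hm2c Hm1p Hm2p Hi1 Hi2 Hm1 Hm2 HK1 HK2 E1 E2 Hdl B1 B2 He1 He2 Heta.
  set (u1 := fun x => conv K1 m1 x + H1 - V x).
  set (u2 := fun x => conv K2 m2 x + H2 - V x).
  set (D := fun x => m1 x - m2 x).
  set (d := fun x => u1 x - u2 x).
  set (L := Lc A b dl). set (k := kc A b M). set (S := e1 + e2).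
  assert (HdM : dl <= M) by (specialize (B1 0); lra).
  assert (HL : 0 < L) by (unfold L, Lc; apply Rdiv_lt_0_compat; auto; apply Rmult_lt_0_compat; auto; apply phi_pos).
  assert (Hk : 0 < k) by (unfold k, kc; apply Rdiv_lt_0_compat; try lra; apply Rmult_lt_0_compat; auto; apply phi_pos).
  assert (HS : 0 <= S) by (unfold S; specialize (He1 0); specialize (He2 0);
     assert (0 <= Rabs (K1 0 - G 0)) by apply Rabs_pos; assert (0 <= Rabs (K2 0 - G 0)) by apply Rabs_pos; lra).
  assert (Hu1c : continuity u1).
  { apply continuity_minus; [apply continuity_plus; [apply conv_cont; auto| apply cont_const]| auto]. }
  assert (Hu2c : continuity u2).
  { apply continuity_minus; [apply continuity_plus; [apply conv_cont; auto| apply cont_const]| auto]. }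
  assert (HDc : continuity D) by (apply continuity_minus; auto).
  assert (Hdc : continuity d) by (apply continuity_minus; auto).
  assert (Hpm : forall x, D x * d x <= - k * d x ^ 2 /\ Rabs (D x) <= L * Rabs (d x)).
  { intro x. unfold D, d. rewrite (E1 x), (E2 x). fold (u1 x) (u2 x).
    destruct (phi_mono A b HA Hb dl M (u1 x) (u2 x) Hdl (B1 x) (B2 x)) as [P1 P2].
    split. unfold k, kc. cbv beta in *. lra. exact P2. }
  assert (HDbound : forall x, Rabs (D x) <= L * (M - dl)).
  { intro x. destruct (Hpm x) as [_ P]. eapply Rle_trans; [apply P|].
    apply Rmult_le_compat_l; [lra|]. unfold d. specialize (B1 x); specialize (B2 x).
    fold (u1 x) in B1. fold (u2 x) in B2. apply Rabs_le; lra. }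
  assert (HQ : forall x, D x * d x <= - (k / L ^ 2) * D x ^ 2).
  { intro x. destruct (Hpm x) as [P1 P2].
    assert (D x ^ 2 <= L ^ 2 * d x ^ 2).
    { rewrite <- (pow2_abs (D x)), <- (pow2_abs (d x)). rewrite <- Rpow_mult_distr.
      apply pow_incr. split; [apply Rabs_pos| auto]. }
    assert (k / L ^ 2 * D x ^ 2 <= k * d x ^ 2).
    { apply (Rmult_le_reg_l (L ^ 2)). nra.
      replace (L ^ 2 * (k / L ^ 2 * D x ^ 2)) with (k * D x ^ 2) by (field; lra).
      replace (L ^ 2 * (k * d x ^ 2)) with (k * (L ^ 2 * d x ^ 2)) by ring.
      apply Rmult_le_compat_l; lra. }
    lra. }
  set (r := fun x => conv K1 m1 x - conv K2 m2 x - conv G D x).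
  assert (Hrc : continuity r).
  { apply continuity_minus; [apply continuity_minus|]; apply conv_cont; auto. }
  assert (Hrb : forall x, Rabs (r x) <= S).
  { intro x. unfold r, D.
    rewrite <- (conv_subf G m1 m2 x) by auto.
    replace (conv K1 m1 x - conv K2 m2 x - (conv G m1 x - conv G m2 x)) with
      ((conv K1 m1 x - conv G m1 x) - (conv K2 m2 x - conv G m2 x)) by ring.
    rewrite (conv_subK K1 G m1), (conv_subK K2 G m2) by auto.
    assert (a1 : Rabs (conv (fun y => K1 y - G y) m1 x) <= e1).
    { rewrite <- (Rmult_1_r e1), <- Hi1. apply conv_bound; auto.
      apply continuity_minus; auto. intros; left; auto. }
    assert (a2 : Rabs (conv (fun y => K2 y - G y) m2 x) <= e2).
    { rewrite <- (Rmult_1_r e2), <- Hi2. apply conv_bound; auto.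
      apply continuity_minus; auto. intros; left; auto. }
    apply Rabs_le_between in a1. apply Rabs_le_between in a2. apply Rabs_le. unfold S. lra. }
  assert (Hid : forall x, d x = conv G D x + r x + (H1 - H2)).
  { intro x. unfold d, r, u1, u2. ring. }
  assert (HGDc : continuity (conv G D)) by (apply conv_cont; auto).
  assert (HintD : RInt D 0 1 = 0).
  { unfold D. rewrite RInt_subR by (apply ex_cont; auto). rewrite Hi1, Hi2. rring. }
  set (I := RInt (fun x => D x ^ 2) 0 1).
  assert (HI : I <= L ^ 2 / k * S * (L * (M - dl))).
  { assert (Hsplit : RInt (fun x => D x * d x) 0 1 =
       RInt (fun x => D x * conv G D x) 0 1 + RInt (fun x => D x * r x) 0 1 + (H1 - H2) * RInt D 0 1).
    { rewrite (RInt_ext (fun x => D x * d x) (fun x => (D x * conv G D x + D x * r x) + (H1 - H2) * D x)).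
      2: { intros; rewrite Hid; rring. }
      rewrite RInt_addR, RInt_addR, RInt_scalR; auto; apply ex_cont; auto.
      apply cont_mul; auto. apply cont_mul; auto.
      apply continuity_plus; apply cont_mul; auto.
      apply continuity_scal; auto. }
    rewrite HintD, Rmult_0_r, Rplus_0_r in Hsplit.
    assert (Hpos : 0 <= RInt (fun x => D x * conv G D x) 0 1).
    { assert (HDp : periodic1 D) by (intro x; unfold D; simpl; rewrite Hm1p, Hm2p; reflexivity).
      apply (HM D (conj HDp HDc) (conv G D)).
      intro x. apply ex_RInt_bridge; auto. apply conv_ex; auto.
      apply ex_RInt_bridge; auto. apply ex_cont; apply cont_mul; auto. }
    assert (Hr2 : - (S * (L * (M - dl))) <= RInt (fun x => D x * r x) 0 1).
    { assert (Rabs (RInt (fun x => D x * r x) 0 1) <= RInt (fun _ => S * (L * (M - dl))) 0 1).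
      { apply RInt_bound; try lra. apply ex_cont; apply cont_mul; auto.
        apply ex_cont; apply cont_const.
        intros t _. rewrite Rabs_mult. rewrite Rmult_comm. apply Rmult_le_compat; try apply Rabs_pos; auto. }
      rewrite RInt_constR in H. apply Rabs_le_between in H. lra. }
    assert (Hup : RInt (fun x => D x * d x) 0 1 <= - (k / L ^ 2) * I).
    { unfold I. rewrite <- RInt_scalR by (apply ex_cont; apply cont_pow2; auto).
      apply RInt_le; try lra. apply ex_cont; apply cont_mul; auto.
      apply ex_cont. apply continuity_scal. apply cont_pow2; auto.
      intros; apply HQ. }
    assert (HkL : 0 < k / L ^ 2) by (apply Rdiv_lt_0_compat; nra).
    apply (Rmult_le_reg_l (k / L ^ 2)); auto.
    replace (k / L ^ 2 * (L ^ 2 / k * S * (L * (M - dl)))) with (S * (L * (M - dl))) by (field; lra).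
    lra. }
  assert (HI0 : 0 <= I).
  { apply RInt_ge_0; try lra. apply ex_cont; apply cont_pow2; auto.
    intros; apply pow2_ge_0. }
  set (rho := rhoc A b BG dl M S eta).
  assert (HGD : forall x, Rabs (conv G D x) <= rho - S).
  { intro x. unfold rho, rhoc. fold L k.
    replace (BG * (L ^ 2 / k * S * (L * (M - dl)) / (2 * eta) + eta / 2) + S - S)
      with (BG * (L ^ 2 / k * S * (L * (M - dl)) / (2 * eta) + eta / 2)) by ring.
    apply Rle_trans with (RInt (fun y => BG / (2 * eta) * D y ^ 2 + BG * eta / 2) 0 1).
    - unfold conv. apply RInt_bound; try lra. apply conv_ex; auto.
      apply ex_cont. apply continuity_plus. apply continuity_scal. apply cont_pow2; auto.
      apply cont_const.
      intros t _. rewrite Rabs_mult.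
      assert (Habs : Rabs (D t) <= D t ^ 2 / (2 * eta) + eta / 2).
      { assert (0 <= (Rabs (D t) - eta) ^ 2) by apply pow2_ge_0.
        rewrite <- (pow2_abs (D t)).
        apply (Rmult_le_reg_l (2 * eta)). lra.
        replace (2 * eta * (Rabs (D t) ^ 2 / (2 * eta) + eta / 2)) with (Rabs (D t) ^ 2 + eta ^ 2) by (field; lra).
        nra. }
      apply Rle_trans with (BG * Rabs (D t)).
      apply Rmult_le_compat_r. apply Rabs_pos. apply HGB.
      replace (BG / (2 * eta) * D t ^ 2 + BG * eta / 2) with (BG * (D t ^ 2 / (2 * eta) + eta / 2)) by (field; lra).
      apply Rmult_le_compat_l; auto.
    - rewrite RInt_addR, RInt_scalR, RInt_constR. fold I.
      replace (BG / (2 * eta) * I + (1 - 0) * (BG * eta / 2)) with (BG * (I / (2 * eta) + eta / 2)) by (field; lra).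
      apply Rmult_le_compat_l; auto. apply Rplus_le_compat_r.
      unfold Rdiv. apply Rmult_le_compat_r. left; apply Rinv_0_lt_compat; lra. auto.
      apply ex_cont; apply cont_pow2; auto.
      apply ex_cont. apply continuity_scal. apply cont_pow2; auto.
      apply ex_cont; apply cont_const. }
  assert (HH : Rabs (H1 - H2) <= rho).
  { apply Rnot_lt_le. intro Hc.
    assert (Hsign : forall x, 0 < (H1 - H2) * d x).
    { intro x. rewrite Hid. specialize (HGD x). specialize (Hrb x).
      apply Rabs_le_between in HGD. apply Rabs_le_between in Hrb.
      unfold Rabs in Hc; destruct Rcase_abs in Hc; nra. }
    assert (HDs : forall x, 0 < - (H1 - H2) * D x).
    { intro x. specialize (Hsign x). destruct (HQ x) as [].
      - assert (HDx : D x * d x < 0 \/ D x = 0).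
        { destruct (Req_dec (D x) 0); [right; auto| left].
          assert (0 < D x ^ 2) by (apply pow2_gt_0; auto).
          assert (0 < k / L ^ 2) by (apply Rdiv_lt_0_compat; nra). nra. }
        assert (HDx' : D x * d x < 0).
        { destruct HDx as [|HD0]; auto. exfalso.
          destruct (Hpm x) as [P1 _]. rewrite HD0, Rmult_0_l in P1.
          assert (d x <> 0) by (intro hd; rewrite hd, Rmult_0_r in Hsign; lra).
          assert (0 < d x ^ 2) by (apply pow2_gt_0; auto). nra. }
        nra.
      - assert (D x * d x < 0).
        { destruct (Req_dec (D x) 0) as [HD0|HD0].
          - destruct (Hpm x) as [P1 _]. rewrite HD0, Rmult_0_l in P1.
            assert (d x <> 0) by (intro hd; rewrite hd, Rmult_0_r in Hsign; lra).
            assert (0 < d x ^ 2) by (apply pow2_gt_0; auto). nra.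
          - assert (0 < D x ^ 2) by (apply pow2_gt_0; auto).
            assert (0 < k / L ^ 2) by (apply Rdiv_lt_0_compat; nra). nra. }
        nra. }
    assert (0 < RInt (fun x => - (H1 - H2) * D x) 0 1).
    { apply RInt_gt_0; try lra. intros; apply HDs. intros; apply cont_iff; apply continuity_scal; auto. }
    rewrite RInt_scalR, HintD in H by (apply ex_cont; auto). lra. }
  split; auto. intro x. fold D. destruct (Hpm x) as [_ P]. eapply Rle_trans; [apply P|].
  apply Rmult_le_compat_l; [lra|].
  rewrite Hid. specialize (HGD x). specialize (Hrb x).
  apply Rabs_le_between in HGD. apply Rabs_le_between in Hrb. apply Rabs_le_between in HH.
  apply Rabs_le. lra.
Qed.

Definition md1 A b (F F1 : R -> R) x := Rpower A b * (- b * Rpower (F x) (- b - 1) * F1 x).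
Definition md2 A b (F F1 F2 : R -> R) x :=
  Rpower A b * (- b * ((- b - 1) * Rpower (F x) (- b - 1 - 1) * F1 x * F1 x + Rpower (F x) (- b - 1) * F2 x)).

Lemma rp_cont F F1 c : (forall x, 0 < F x) -> (forall x, derivable_pt_lim F x (F1 x)) ->
  continuity (fun x => Rpower (F x) c).
Proof.
  intros Hp Hd. apply (deriv_cont _ (fun x => c * Rpower (F x) (c - 1) * F1 x)).
  intro; apply rp_deriv; auto.
Qed.

Lemma phiF_C2 A b F F1 F2 : 0 < A -> 0 < b -> C2T_with F F1 F2 -> (forall x, 0 < F x) ->
  C2T_with (fun x => phi A b (F x)) (md1 A b F F1) (md2 A b F F1 F2).
Proof.
  intros HA Hb HF Hp.
  assert (HF1c := C2_cont1 _ _ _ HF).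
  destruct HF as (Hper & Hd & Hd1 & Hc2).
  repeat split.
  - intro x. rewrite Hper. reflexivity.
  - intro x. apply (derivable_pt_lim_locally_ext (fun x => Rpower A b * Rpower (F x) (- b)) _ _ (x - 1) (x + 1)).
    lra. intros y _. symmetry; apply phi_alt; auto.
    unfold md1. apply derivable_pt_lim_scal.
    replace (- b * Rpower (F x) (- b - 1) * F1 x) with (- b * Rpower (F x) (- b - 1) * F1 x) by ring.
    apply rp_deriv; auto.
  - intro x. unfold md1. apply derivable_pt_lim_scal.
    replace (- b * ((- b - 1) * Rpower (F x) (- b - 1 - 1) * F1 x * F1 x + Rpower (F x) (- b - 1) * F2 x))
      with (- b * ((- b - 1) * Rpower (F x) (- b - 1 - 1) * F1 x * F1 x + Rpower (F x) (- b - 1) * F2 x)) by ring.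
    apply (derivable_pt_lim_ext (fun x => - b * (Rpower (F x) (- b - 1) * F1 x))).
    + intros; ring.
    + apply derivable_pt_lim_scal.
      replace ((- b - 1) * Rpower (F x) (- b - 1 - 1) * F1 x * F1 x + Rpower (F x) (- b - 1) * F2 x)
        with (((- b - 1) * Rpower (F x) (- b - 1 - 1) * F1 x) * F1 x + Rpower (F x) (- b - 1) * F2 x) by ring.
      apply (derivable_pt_lim_mult (fun x => Rpower (F x) (- b - 1)) F1).
      apply rp_deriv; auto. auto.
  - unfold md2. intro x. apply continuity_pt_scal. apply continuity_pt_scal.
    apply continuity_pt_plus.
    + repeat apply continuity_pt_mult; auto.
      apply continuity_pt_const; intros ? ?; auto.
      apply (rp_cont F F1); auto.
    + apply continuity_pt_mult; auto. apply (rp_cont F F1); auto.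
Qed.

Lemma ucv_plus f F g G : unif_cv f F -> unif_cv g G ->
  unif_cv (fun n x => f n x + g n x) (fun x => F x + G x).
Proof.
  intros Hf Hg eps He. destruct (Hf (eps/2) ltac:(lra)) as [N1 H1].
  destruct (Hg (eps/2) ltac:(lra)) as [N2 H2]. exists (max N1 N2). intros n x Hn.
  specialize (H1 n x ltac:(lia)). specialize (H2 n x ltac:(lia)).
  apply Rabs_le_between in H1. apply Rabs_le_between in H2. apply Rabs_le. lra.
Qed.

Lemma ucv_minus f F g G : unif_cv f F -> unif_cv g G ->
  unif_cv (fun n x => f n x - g n x) (fun x => F x - G x).
Proof.
  intros Hf Hg eps He. destruct (Hf (eps/2) ltac:(lra)) as [N1 H1].
  destruct (Hg (eps/2) ltac:(lra)) as [N2 H2]. exists (max N1 N2). intros n x Hn.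
  specialize (H1 n x ltac:(lia)). specialize (H2 n x ltac:(lia)).
  apply Rabs_le_between in H1. apply Rabs_le_between in H2. apply Rabs_le. lra.
Qed.

Lemma ucv_ext f F g G : unif_cv f F -> (forall n x, f n x = g n x) -> (forall x, F x = G x) -> unif_cv g G.
Proof.
  intros Hf E1 E2 eps He. destruct (Hf eps He) as [N H]. exists N. intros n x Hn.
  rewrite <- E1, <- E2. auto.
Qed.

Lemma ucv_const h H : Un_cv h H -> unif_cv (fun n _ => h n) (fun _ => H).
Proof.
  intros Hc eps He. destruct (Hc eps He) as [N HN]. exists N. intros n x Hn.
  left. apply HN; lia.
Qed.

Lemma ucv_const_fun F : unif_cv (fun _ => F) F.
Proof. intros eps He. exists 0%nat. intros. rewrite Rminus_diag, Rabs_R0. lra. Qed.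

Lemma ucv_mult f F g G C : unif_cv f F -> unif_cv g G -> 0 <= C -> (forall x, Rabs (F x) <= C) ->
  (exists N, forall n x, (n >= N)%nat -> Rabs (g n x) <= C) ->
  unif_cv (fun n x => f n x * g n x) (fun x => F x * G x).
Proof.
  intros Hf Hg HC HF [N0 Hg0] eps He.
  set (e := eps / (2 * (C + 1))).
  assert (He' : 0 < e) by (unfold e; apply Rdiv_lt_0_compat; lra).
  destruct (Hf e He') as [N1 H1]. destruct (Hg e He') as [N2 H2].
  exists (max N0 (max N1 N2)). intros n x Hn.
  specialize (H1 n x ltac:(lia)). specialize (H2 n x ltac:(lia)). specialize (Hg0 n x ltac:(lia)).
  specialize (HF x).
  replace (f n x * g n x - F x * G x) with ((f n x - F x) * g n x + F x * (g n x - G x)) by ring.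
  eapply Rle_trans. apply Rabs_triang. rewrite !Rabs_mult.
  assert (Rabs (f n x - F x) * Rabs (g n x) <= e * C) by (apply Rmult_le_compat; auto; apply Rabs_pos).
  assert (Rabs (F x) * Rabs (g n x - G x) <= C * e) by (apply Rmult_le_compat; auto; apply Rabs_pos).
  assert (2 * C * e <= eps).
  { unfold e. apply (Rmult_le_reg_r (2 * (C + 1))). lra.
    replace (2 * C * (eps / (2 * (C + 1))) * (2 * (C + 1))) with (2 * C * eps) by (field; lra). nra. }
  lra.
Qed.


Lemma ucv_scal c f F : unif_cv f F -> unif_cv (fun n x => c * f n x) (fun x => c * F x).
Proof.
  intros Hf eps He. destruct (Hf (eps / (Rabs c + 1))) as [N HN].
  apply Rdiv_lt_0_compat; auto. assert (0 <= Rabs c) by apply Rabs_pos. lra.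
  exists N. intros n x Hn. rewrite <- Rmult_minus_distr_l, Rabs_mult.
  specialize (HN n x Hn). assert (0 <= Rabs c) by apply Rabs_pos.
  apply Rle_trans with (Rabs c * (eps / (Rabs c + 1))). apply Rmult_le_compat_l; auto.
  apply (Rmult_le_reg_r (Rabs c + 1)). lra.
  replace (Rabs c * (eps / (Rabs c + 1)) * (Rabs c + 1)) with (Rabs c * eps) by (field; lra). nra.
Qed.

Lemma ucv_tail f F C : unif_cv f F -> (forall x, Rabs (F x) <= C) ->
  exists N, forall n x, (n >= N)%nat -> Rabs (f n x) <= C + 1.
Proof.
  intros Hf HF. destruct (Hf 1 ltac:(lra)) as [N HN]. exists N. intros n x Hn.
  specialize (HN n x Hn). specialize (HF x).
  apply Rabs_le_between in HN. apply Rabs_le_between in HF. apply Rabs_le. lra.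
Qed.

Lemma ucv_rp f F c d M : unif_cv f F -> 0 < d -> (forall x, d <= F x <= M) ->
  (exists N, forall n x, (n >= N)%nat -> d <= f n x <= M) ->
  unif_cv (fun n x => Rpower (f n x) c) (fun x => Rpower (F x) c).
Proof.
  intros Hf Hd HF [N0 H0] eps He.
  set (Lam := Rabs c * (Rpower d (c - 1) + Rpower M (c - 1))).
  assert (HL : 0 <= Lam).
  { unfold Lam. apply Rmult_le_pos. apply Rabs_pos.
    assert (H1 := Rpower_pos d (c - 1)). assert (H2 := Rpower_pos M (c - 1)). lra. }
  destruct (Hf (eps / (Lam + 1))) as [N HN]. apply Rdiv_lt_0_compat; lra.
  exists (max N0 N). intros n x Hn.
  eapply Rle_trans. apply (rp_lip _ _ d M c); auto. apply H0; lia.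
  fold Lam. specialize (HN n x ltac:(lia)).
  apply Rle_trans with (Lam * (eps / (Lam + 1))). apply Rmult_le_compat_l; auto.
  apply (Rmult_le_reg_r (Lam + 1)). lra.
  replace (Lam * (eps / (Lam + 1)) * (Lam + 1)) with (Lam * eps) by (field; lra). nra.
Qed.

Lemma ucv_conv Kn K mn m BK : unif_cv Kn K -> unif_cv mn m ->
  (forall n, continuity (Kn n)) -> (forall n, continuity (mn n)) -> continuity K -> continuity m ->
  (forall n, RInt (mn n) 0 1 = 1) -> (forall n x, 0 <= mn n x) -> (forall y, Rabs (K y) <= BK) ->
  unif_cv (fun n => conv (Kn n) (mn n)) (conv K m).
Proof.
  intros HK Hm HKc Hmc Kc mc Hi Hp HB eps He.
  assert (HB0 : 0 <= BK) by (apply Rle_trans with (Rabs (K 0)); [apply Rabs_pos| auto]).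
  set (e := eps / (2 * (BK + 1))).
  assert (He' : 0 < e) by (unfold e; apply Rdiv_lt_0_compat; lra).
  destruct (HK e He') as [N1 H1]. destruct (Hm e He') as [N2 H2].
  exists (max N1 N2). intros n x Hn.
  replace (conv (Kn n) (mn n) x - conv K m x) with
    ((conv (Kn n) (mn n) x - conv K (mn n) x) + (conv K (mn n) x - conv K m x)) by ring.
  rewrite conv_subK, conv_subf by auto.
  assert (a1 : Rabs (conv (fun y => Kn n y - K y) (mn n) x) <= e * 1).
  { rewrite <- (Hi n). apply conv_bound; auto. apply continuity_minus; auto.
    intro y. replace (y) with (x - (x - y)) by ring. apply H1; lia. }
  assert (a2 : Rabs (conv K (fun y => mn n y - m y) x) <= BK * e).
  { apply conv_bound2; auto. apply continuity_minus; auto. intro y; apply H2; lia. }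
  assert (2 * BK * e + e <= eps).
  { unfold e. apply (Rmult_le_reg_r (2 * (BK + 1))). lra.
    replace ((2 * BK * (eps / (2 * (BK + 1))) + eps / (2 * (BK + 1))) * (2 * (BK + 1))) with
      ((2 * BK + 1) * eps) by (field; lra). nra. }
  eapply Rle_trans. apply Rabs_triang. nra.
Qed.

Lemma conv_C2 V V1 V2 K K1 K2 m H : C2T_with V V1 V2 -> C2T_with K K1 K2 -> continuity m ->
  C2T_with (fun x => conv K m x + H - V x) (fun x => conv K1 m x - V1 x) (fun x => conv K2 m x - V2 x).
Proof.
  intros HV HK Hmc.
  assert (HKc1 := C2_cont1 _ _ _ HK). assert (HKc := C2_cont0 _ _ _ HK).
  destruct HK as (HKp & HKd & HKd1 & HKc2).
  destruct HV as (HVp & HVd & HVd1 & HVc2).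
  repeat split.
  - intro x. rewrite (conv_periodic K m HKp x), HVp. ring.
  - intro x. apply derivable_pt_lim_minus. 
    replace (conv K1 m x) with (conv K1 m x + 0) by ring.
    apply derivable_pt_lim_plus. apply conv_deriv; auto. apply derivable_pt_lim_const. apply HVd.
  - intro x. apply derivable_pt_lim_minus. apply conv_deriv; auto. apply HVd1.
  - apply continuity_minus; auto. apply conv_cont; auto.
Qed.

Lemma delta0_pos A K : 0 < A -> 1 <= K -> 0 < delta0 A K.
Proof.
  intros HA HK. unfold delta0.
  assert (Hs0 : 0 < Rmin 1 A) by (unfold Rmin; destruct Rle_dec; lra).
  assert (Hsq : 0 < sqrt (Rmin 1 A / (2 * K))) by (apply sqrt_lt_R0; apply Rdiv_lt_0_compat; lra).
  assert (Htau : 0 < Rmin (1/2) (sqrt (Rmin 1 A / (2 * K)))) by (unfold Rmin at 1; destruct Rle_dec; lra).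
  assert (HE : 1 < exp (sqrt K / sqrt A)).
  { rewrite <- exp_0. apply exp_increasing. apply Rdiv_lt_0_compat; apply sqrt_lt_R0; lra. }
  unfold Rmin at 1. destruct Rle_dec; [lra|].
  apply Rdiv_lt_0_compat. apply Rmult_lt_0_compat. lra. apply pow_lt; auto.
  apply pow_lt; lra.
Qed.

Lemma params BG Cst T : 0 <= BG -> 0 <= Cst -> 0 < T ->
  exists eta e, 0 < eta /\ 0 < e /\ BG * (Cst * (e + e) / (2 * eta) + eta / 2) + (e + e) <= T.
Proof.
  intros HB HC HT.
  set (eta := T / (BG + 1)).
  assert (Heta : 0 < eta) by (unfold eta; apply Rdiv_lt_0_compat; lra).
  set (Q := BG * Cst / eta + 1).
  assert (HQ : 1 <= Q) by (unfold Q; assert (0 <= BG * Cst / eta) by (apply Rdiv_le_0_compat; nra); lra).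
  exists eta, (T / (4 * Q)). split; auto. split. apply Rdiv_lt_0_compat; lra.
  assert (E1 : BG * (eta / 2) <= T / 2).
  { unfold eta. apply (Rmult_le_reg_r (2 * (BG + 1))). lra.
    replace (BG * (T / (BG + 1) / 2) * (2 * (BG + 1))) with (BG * T) by (field; lra).
    replace (T / 2 * (2 * (BG + 1))) with (BG * T + T) by field. lra. }
  assert (E2 : BG * (Cst * (T / (4 * Q) + T / (4 * Q)) / (2 * eta)) + (T / (4 * Q) + T / (4 * Q)) <= T / 2).
  { replace (BG * (Cst * (T / (4 * Q) + T / (4 * Q)) / (2 * eta)) + (T / (4 * Q) + T / (4 * Q)))
      with (T / (2 * Q) * (BG * Cst / (2 * eta) + 1)) by (field; lra).
    apply Rle_trans with (T / (2 * Q) * Q).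
    apply Rmult_le_compat_l. apply Rlt_le, Rdiv_lt_0_compat; lra.
    unfold Q. assert (BG * Cst / (2 * eta) <= BG * Cst / eta).
    { unfold Rdiv. apply Rmult_le_compat_l. nra. apply Rinv_le_contravar; lra. } lra.
    right. field. lra. }
  replace (BG * (Cst * (T / (4 * Q) + T / (4 * Q)) / (2 * eta) + eta / 2))
    with (BG * (Cst * (T / (4 * Q) + T / (4 * Q)) / (2 * eta)) + BG * (eta / 2)) by ring.
  lra.
Qed.

Lemma lim_bound a u l N eps : (forall k, (k >= N)%nat -> Rabs (a - u k) <= eps) -> Un_cv u l ->
  Rabs (a - l) <= eps.
Proof.
  intros Hb Hc. apply Rnot_lt_le. intro Hlt.
  destruct (Hc ((Rabs (a - l) - eps) / 2)) as [N1 HN1]. lra.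
  specialize (HN1 (max N N1) ltac:(lia)). specialize (Hb (max N N1) ltac:(lia)).
  unfold R_dist in HN1.
  assert (Rabs (a - l) <= Rabs (a - u (max N N1)) + Rabs (u (max N N1) - l)).
  { replace (a - l) with ((a - u (max N N1)) + (u (max N N1) - l)) by ring. apply Rabs_triang. }
  lra.
Qed.

Lemma lim_ge u l N c : (forall k, (k >= N)%nat -> c <= u k) -> Un_cv u l -> c <= l.
Proof.
  intros Hb Hc. apply Rnot_lt_le. intro Hlt.
  destruct (Hc (c - l)) as [N1 HN1]. lra.
  specialize (HN1 (max N N1) ltac:(lia)). specialize (Hb (max N N1) ltac:(lia)).
  unfold R_dist in HN1. apply Rabs_def2 in HN1. lra.
Qed.

Lemma lim_le u l N c : (forall k, (k >= N)%nat -> u k <= c) -> Un_cv u l -> l <= c.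
Proof.
  intros Hb Hc. apply Rnot_lt_le. intro Hlt.
  destruct (Hc (l - c)) as [N1 HN1]. lra.
  specialize (HN1 (max N N1) ltac:(lia)). specialize (Hb (max N N1) ltac:(lia)).
  unfold R_dist in HN1. apply Rabs_def2 in HN1. lra.
Qed.

Lemma ucv_pointwise f F x : unif_cv f F -> Un_cv (fun n => f n x) (F x).
Proof.
  intros H eps He. destruct (H (eps/2) ltac:(lra)) as [N HN]. exists N. intros n Hn.
  unfold R_dist. specialize (HN n x Hn). lra.
Qed.

Lemma ucv_cont f F : unif_cv f F -> (forall n, continuity (f n)) -> continuity F.
Proof.
  intros Hu Hc x eps He.
  destruct (Hu (eps/4) ltac:(lra)) as [N HN].
  destruct (Hc N x (eps/4) ltac:(lra)) as [alp [Halp Hd]].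
  exists alp. split; auto. intros y Hy. specialize (Hd y Hy).
  simpl in *. unfold R_dist in *.
  assert (H1 : Rabs (F y - f N y) <= eps/4) by (rewrite Rabs_minus_sym; apply HN; lia).
  assert (H2 : Rabs (f N x - F x) <= eps/4) by (apply HN; lia).
  replace (F y - F x) with ((F y - f N y) + (f N y - f N x) + (f N x - F x)) by ring.
  apply Rle_lt_trans with (Rabs (F y - f N y + (f N y - f N x)) + Rabs (f N x - F x)). apply Rabs_triang.
  apply Rle_lt_trans with (Rabs (F y - f N y) + Rabs (f N y - f N x) + Rabs (f N x - F x)).
  apply Rplus_le_compat_r. apply Rabs_triang. lra.
Qed.

Lemma C2_transfer f g f1 f2 : C2T_with f f1 f2 -> (forall x, g x = f x) -> C2T_with g f1 f2.
Proof.
  intros (Hp & Hd & Hd1 & Hc) E. repeat split; auto.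
  - intro x; rewrite !E; apply Hp.
  - intro x. apply (derivable_pt_lim_ext f). intros; rewrite E; auto. auto.
Qed.

Theorem mainTheorem11
  (alpha j : R) (V G : R -> R) (Gn : nat -> R -> R)
  (mn : nat -> R -> R) (Hn : nat -> R) :
  0 < alpha -> alpha <= 2 -> j <> 0 ->
  C2T V -> C2T G -> condM G ->
  (forall n, C2T (Gn n)) ->
  C2_cv Gn G ->
  (forall n, solvesP alpha j V (Gn n) (mn n) (Hn n)) ->
  exists (m : R -> R) (Hbar : R),
    C2T m /\ C2_cv mn m /\ Un_cv Hn Hbar /\ solvesP alpha j V G m Hbar.
Proof.
  intros Hal0 Hal2 Hj HV HGC2 HM HGn HGcv Hsol.
  destruct HV as [V1 [V2 HV]].
  destruct HGcv as [Gn1 [Gn2 [G1 [G2 [HGnC [HGC [cv0 [cv1 cv2]]]]]]]].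
  set (A := j ^ 2 / 2). set (b := / alpha).
  assert (HA : 0 < A) by (unfold A; assert (0 < j ^ 2) by (apply pow2_gt_0; auto); lra).
  assert (Hb : 0 < b) by (unfold b; apply Rinv_0_lt_compat; lra).
  assert (Hbinv : / b = alpha) by (unfold b; apply Rinv_inv).
  assert (SF : forall n, continuity (mn n) /\ periodic1 (mn n) /\ (forall x, 0 < mn n x) /\ RInt (mn n) 0 1 = 1 /\
     (forall x, conv (Gn n) (mn n) x + Hn n - V x = A / Rpower (mn n x) alpha) /\
     C2T_with (fun x => conv (Gn n) (mn n) x + Hn n - V x) (fun x => conv (Gn1 n) (mn n) x - V1 x)
       (fun x => conv (Gn2 n) (mn n) x - V2 x)).
  { intro n. apply (sol_facts alpha j V V1 V2 (Gn n) (Gn1 n) (Gn2 n)); auto. }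
  set (Fn := fun n x => conv (Gn n) (mn n) x + Hn n - V x).
  set (Fn1 := fun n x => conv (Gn1 n) (mn n) x - V1 x).
  set (Fn2 := fun n x => conv (Gn2 n) (mn n) x - V2 x).
  assert (Hmc : forall n, continuity (mn n)) by (intro n; apply (SF n)).
  assert (Hmp : forall n, periodic1 (mn n)) by (intro n; apply (SF n)).
  assert (Hmpos : forall n x, 0 < mn n x) by (intro n; apply (SF n)).
  assert (Hmint : forall n, RInt (mn n) 0 1 = 1) by (intro n; apply (SF n)).
  assert (HFeq : forall n x, Fn n x = A / Rpower (mn n x) alpha) by (intro n; apply (SF n)).
  assert (HFC2 : forall n, C2T_with (Fn n) (Fn1 n) (Fn2 n)) by (intro n; apply (SF n)).
  assert (HFpos : forall n x, 0 < Fn n x).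
  { intros n x. rewrite HFeq. apply Rdiv_lt_0_compat; auto. apply Rpower_pos. }
  assert (Hmphi : forall n x, mn n x = phi A b (Fn n x)).
  { intros n x. rewrite HFeq, <- Hbinv. symmetry. apply phi_inv; auto. }
  assert (HGc := C2_cont0 _ _ _ HGC). assert (HG1c := C2_cont1 _ _ _ HGC).
  assert (HG2c : continuity G2) by apply HGC.
  assert (HGp : periodic1 G) by apply HGC.
  assert (HG1p : periodic1 G1) by (apply (deriv_periodic G); apply HGC).
  assert (HG2p : periodic1 G2) by (apply (deriv_periodic G1); auto; apply HGC).
  assert (HVc := C2_cont0 _ _ _ HV). assert (HV1c := C2_cont1 _ _ _ HV).
  assert (HV2c : continuity V2) by apply HV.
  assert (HVp : periodic1 V) by apply HV.
  assert (HV1p : periodic1 V1) by (apply (deriv_periodic V); apply HV).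
  assert (HV2p : periodic1 V2) by (apply (deriv_periodic V1); auto; apply HV).
  destruct (per_bound G HGp HGc) as [BGa [HBGa HGa]].
  destruct (per_bound G1 HG1p HG1c) as [BGb [HBGb HGb]].
  destruct (per_bound G2 HG2p HG2c) as [BGc [HBGc HGcb]].
  destruct (per_bound V HVp HVc) as [BVa [HBVa HVa]].
  destruct (per_bound V1 HV1p HV1c) as [BVb [HBVb HVb]].
  destruct (per_bound V2 HV2p HV2c) as [BVc [HBVc HVcb]].
  set (BG := BGa + BGb + BGc). set (BV := BVa + BVb + BVc).
  assert (HBG : 0 <= BG) by (unfold BG; lra). assert (HBV : 0 <= BV) by (unfold BV; lra).
  assert (HG0 : forall y, Rabs (G y) <= BG) by (intro y; specialize (HGa y); unfold BG; lra).
  assert (HG1 : forall y, Rabs (G1 y) <= BG) by (intro y; specialize (HGb y); unfold BG; lra).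
  assert (HG2 : forall y, Rabs (G2 y) <= BG) by (intro y; specialize (HGcb y); unfold BG; lra).
  assert (HV0 : forall y, Rabs (V y) <= BV) by (intro y; specialize (HVa y); unfold BV; lra).
  assert (HV1 : forall y, Rabs (V1 y) <= BV) by (intro y; specialize (HVb y); unfold BV; lra).
  assert (HV2 : forall y, Rabs (V2 y) <= BV) by (intro y; specialize (HVcb y); unfold BV; lra).
  assert (HGnc : forall n, continuity (Gn n)) by (intro n; apply (C2_cont0 _ _ _ (HGnC n))).
  assert (HGn1c : forall n, continuity (Gn1 n)) by (intro n; apply (C2_cont1 _ _ _ (HGnC n))).
  assert (HGn2c : forall n, continuity (Gn2 n)) by (intro n; apply (HGnC n)).
  destruct (cv0 1 ltac:(lra)) as [Na HNa].
  destruct (cv1 1 ltac:(lra)) as [Nb HNb].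
  destruct (cv2 1 ltac:(lra)) as [Nc HNc].
  set (N0 := max Na (max Nb Nc)).
  set (B := BG + 1).
  assert (HBn0 : forall n y, (n >= N0)%nat -> Rabs (Gn n y) <= B).
  { intros n y Hnn. specialize (HNa n y ltac:(unfold N0 in *; lia)). specialize (HG0 y).
    unfold B. apply Rabs_le_between in HNa. apply Rabs_le_between in HG0. apply Rabs_le. lra. }
  assert (HBn1 : forall n y, (n >= N0)%nat -> Rabs (Gn1 n y) <= B).
  { intros n y Hnn. specialize (HNb n y ltac:(unfold N0 in *; lia)). specialize (HG1 y).
    unfold B. apply Rabs_le_between in HNb. apply Rabs_le_between in HG1. apply Rabs_le. lra. }
  assert (HBn2 : forall n y, (n >= N0)%nat -> Rabs (Gn2 n y) <= B).
  { intros n y Hnn. specialize (HNc n y ltac:(unfold N0 in *; lia)). specialize (HG2 y).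
    unfold B. apply Rabs_le_between in HNc. apply Rabs_le_between in HG2. apply Rabs_le. lra. }
  set (K := B + BV + 1).
  set (dl := delta0 A K). set (M := A + 2 * B + 2 * BV).
  assert (Hdl : 0 < dl) by (apply delta0_pos; auto; unfold K, B; lra).
  assert (Hbnd : forall n, (n >= N0)%nat -> forall x, dl <= Fn n x <= M).
  { intros n Hnn x. split.
    - apply (F_lower A alpha K (Fn n) (Fn1 n) (Fn2 n) (mn n) HA ltac:(lra) ltac:(unfold K, B; lra)
        (proj1 (HFC2 n)) (proj1 (proj2 (HFC2 n))) (proj1 (proj2 (proj2 (HFC2 n))))); auto.
      intro y. unfold Fn2. assert (Rabs (conv (Gn2 n) (mn n) y) <= B).
      { rewrite <- (Rmult_1_r B), <- (Hmint n). apply conv_bound; auto. intros; left; auto. }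
      specialize (HV2 y). apply Rabs_le_between in H. apply Rabs_le_between in HV2.
      apply Rabs_le. unfold K. lra.
    - apply (F_upper A alpha (Gn n) (mn n) (Hn n) V B BV); auto; intro y; first [apply HBn0; auto | apply (HFeq n y)]. }
  set (L := Lc A b dl). set (k0 := kc A b M).
  assert (HdM : dl <= M) by (specialize (Hbnd N0 (le_n _) 0); lra).
  assert (HL : 0 < L) by (unfold L, Lc; apply Rdiv_lt_0_compat; auto; apply Rmult_lt_0_compat; auto; apply phi_pos).
  assert (Hk0 : 0 < k0) by (unfold k0, kc; apply Rdiv_lt_0_compat; try lra; apply Rmult_lt_0_compat; auto; apply phi_pos).
  assert (Hcauchy : forall eps, 0 < eps -> exists N, forall n k, (n >= N)%nat -> (k >= N)%nat ->
     Rabs (Hn n - Hn k) <= eps /\ forall x, Rabs (mn n x - mn k x) <= eps).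
  { intros eps He.
    set (Cst := L ^ 2 / k0 * (L * (M - dl))).
    assert (HCst : 0 <= Cst).
    { unfold Cst. apply Rmult_le_pos. apply Rlt_le, Rdiv_lt_0_compat; auto. apply pow_lt; auto.
      apply Rmult_le_pos; lra. }
    destruct (params BG Cst (eps / (2 * L + 1)) HBG HCst) as [eta [e [Heta [Hee Hpar]]]].
    { apply Rdiv_lt_0_compat; lra. }
    destruct (cv0 e Hee) as [Ne HNe].
    exists (max N0 Ne). intros n k Hn' Hk'.
    destruct (cauchy_core A b G BG V (mn n) (mn k) (Gn n) (Gn k) (Hn n) (Hn k) e e dl M eta
      HA Hb HGc HM HBG HG0 HVc (Hmc n) (Hmc k) (Hmp n) (Hmp k) (Hmint n) (Hmint k) (Hmpos n) (Hmpos k)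
      (HGnc n) (HGnc k) (Hmphi n) (Hmphi k) Hdl (Hbnd n ltac:(lia)) (Hbnd k ltac:(lia))
      (fun y => HNe n y ltac:(lia)) (fun y => HNe k y ltac:(lia)) Heta) as [C1 C2].
    assert (Hrho : rhoc A b BG dl M (e + e) eta <= eps / (2 * L + 1)).
    { unfold rhoc. fold L k0. eapply Rle_trans; [|exact Hpar]. right. unfold Cst. field. lra. }
    assert (Hr0 : 0 <= rhoc A b BG dl M (e + e) eta) by (eapply Rle_trans; [apply Rabs_pos| exact C1]).
    assert (HT : eps / (2 * L + 1) <= eps).
    { apply (Rmult_le_reg_r (2 * L + 1)). lra. replace (eps / (2 * L + 1) * (2 * L + 1)) with eps by (field; lra). nra. }
    assert (HT2 : L * (2 * (eps / (2 * L + 1))) <= eps).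
    { apply (Rmult_le_reg_r (2 * L + 1)). lra.
      replace (L * (2 * (eps / (2 * L + 1))) * (2 * L + 1)) with (2 * L * eps) by (field; lra). nra. }
    split. lra. intro x. eapply Rle_trans. apply C2. fold L.
    eapply Rle_trans; [|exact HT2]. apply Rmult_le_compat_l; lra. }
  assert (hcm : forall x, Cauchy_crit (fun n => mn n x)).
  { intros x eps He. destruct (Hcauchy (eps/2) ltac:(lra)) as [N HN]. exists N.
    intros n k Hn' Hk'. unfold R_dist. destruct (HN n k Hn' Hk') as [_ Hx]. specialize (Hx x). lra. }
  assert (hcH : Cauchy_crit Hn).
  { intros eps He. destruct (Hcauchy (eps/2) ltac:(lra)) as [N HN]. exists N.
    intros n k Hn' Hk'. unfold R_dist. destruct (HN n k Hn' Hk') as [Hx _]. lra. }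
  set (m := fun x => proj1_sig (Rcomplete.R_complete _ (hcm x))).
  assert (Hmcv : forall x, Un_cv (fun n => mn n x) (m x)) by (intro x; apply (proj2_sig (Rcomplete.R_complete _ (hcm x)))).
  destruct (Rcomplete.R_complete Hn hcH) as [H HHcv].
  assert (Hucv : unif_cv mn m).
  { intros eps He. destruct (Hcauchy eps He) as [N HN]. exists N. intros n x Hn'.
    apply (lim_bound _ (fun k => mn k x) _ N); auto. intros k Hk. apply (HN n k Hn' Hk). }
  assert (Hmc' : continuity m) by (apply (ucv_cont mn); auto).
  assert (Hmp' : periodic1 m).
  { intro x. apply (UL_sequence (fun n => mn n x)); auto.
    intros eps He. destruct (Hmcv (x + 1) eps He) as [N HN]. exists N. intros n Hn'.
    rewrite <- (Hmp n x). apply HN; auto. }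
  assert (HphiM : 0 < phi A b M) by apply phi_pos.
  assert (Hmpos' : forall x, phi A b M <= m x).
  { intro x. apply (lim_ge (fun n => mn n x) _ N0); auto. intros k Hk. rewrite Hmphi.
    apply phi_decr; auto. split. apply HFpos. apply (Hbnd k Hk x). }
  assert (Hmint' : RInt m 0 1 = 1).
  { apply Rminus_diag_uniq. apply Rabs_eq_0. apply Rle_antisym; [|apply Rabs_pos].
    apply le_epsilon. intros eps He. rewrite Rplus_0_l.
    destruct (Hucv eps He) as [N HN].
    replace (RInt m 0 1 - 1) with (RInt (fun x => m x - mn N x) 0 1)
      by (rewrite RInt_subR by (apply ex_cont; auto); rewrite Hmint; reflexivity).
    apply Rle_trans with (RInt (fun _ => eps) 0 1).
    apply RInt_bound; try lra. apply ex_cont; apply continuity_minus; auto.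
    apply ex_cont; apply cont_const. intros t _. rewrite Rabs_minus_sym. apply HN; lia.
    rewrite RInt_constR. lra. }
  set (F := fun x => conv G m x + H - V x).
  set (F1 := fun x => conv G1 m x - V1 x).
  set (F2 := fun x => conv G2 m x - V2 x).
  assert (Hmnn : forall n x, 0 <= mn n x) by (intros; left; auto).
  assert (HFcv : unif_cv Fn F).
  { apply ucv_minus. apply ucv_plus. apply (ucv_conv Gn G mn m BG); auto.
    apply ucv_const; auto. apply ucv_const_fun. }
  assert (HF1cv : unif_cv Fn1 F1).
  { apply ucv_minus. apply (ucv_conv Gn1 G1 mn m BG); auto. apply ucv_const_fun. }
  assert (HF2cv : unif_cv Fn2 F2).
  { apply ucv_minus. apply (ucv_conv Gn2 G2 mn m BG); auto. apply ucv_const_fun. }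
  assert (HFb : forall x, dl <= F x <= M).
  { intro x. split.
    - apply (lim_ge (fun n => Fn n x) _ N0). intros k Hk; apply (Hbnd k Hk x). apply ucv_pointwise; auto.
    - apply (lim_le (fun n => Fn n x) _ N0). intros k Hk; apply (Hbnd k Hk x). apply ucv_pointwise; auto. }
  assert (HFpos' : forall x, 0 < F x) by (intro x; specialize (HFb x); lra).
  assert (Hmphi' : forall x, m x = phi A b (F x)).
  { intro x. apply (UL_sequence (fun n => mn n x)); auto.
    intros eps He. destruct (HFcv (eps / (L + 1))) as [N HN]. apply Rdiv_lt_0_compat; lra.
    exists (max N N0). intros n Hn'. unfold R_dist. rewrite Hmphi.
    destruct (phi_mono A b HA Hb dl M (Fn n x) (F x) Hdl (Hbnd n ltac:(lia) x) (HFb x)) as [_ P].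
    fold L in P. specialize (HN n x ltac:(lia)).
    apply Rle_lt_trans with (L * (eps / (L + 1))). eapply Rle_trans; [exact P|].
    apply Rmult_le_compat_l; lra.
    apply (Rmult_lt_reg_r (L + 1)). lra.
    replace (L * (eps / (L + 1)) * (L + 1)) with (L * eps) by (field; lra). nra. }
  assert (HFC2' : C2T_with F F1 F2) by (apply (conv_C2 V V1 V2 G G1 G2 m H HV HGC Hmc')).
  assert (HmC2 : C2T_with m (md1 A b F F1) (md2 A b F F1 F2)).
  { apply (C2_transfer (fun x => phi A b (F x))). apply (phiF_C2 A b F F1 F2 HA Hb HFC2' HFpos'). exact Hmphi'. }
  assert (HmnC2 : forall n, C2T_with (mn n) (md1 A b (Fn n) (Fn1 n)) (md2 A b (Fn n) (Fn1 n) (Fn2 n))).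
  { intro n. apply (C2_transfer (fun x => phi A b (Fn n x))).
    apply (phiF_C2 A b (Fn n) (Fn1 n) (Fn2 n) HA Hb (HFC2 n) (HFpos n)). exact (Hmphi n). }
  assert (Hmpos'' : forall x, 0 < m x) by (intro x; specialize (Hmpos' x); lra).
  assert (HF1b : forall x, Rabs (F1 x) <= BG + BV).
  { intro x. unfold F1. assert (Rabs (conv G1 m x) <= BG).
    { rewrite <- (Rmult_1_r BG), <- Hmint'. apply conv_bound; auto. intros; left; auto. }
    specialize (HV1 x). apply Rabs_le_between in H0. apply Rabs_le_between in HV1. apply Rabs_le. lra. }
  assert (HF2b : forall x, Rabs (F2 x) <= BG + BV).
  { intro x. unfold F2. assert (Rabs (conv G2 m x) <= BG).
    { rewrite <- (Rmult_1_r BG), <- Hmint'. apply conv_bound; auto. intros; left; auto. }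
    specialize (HV2 x). apply Rabs_le_between in H0. apply Rabs_le_between in HV2. apply Rabs_le. lra. }
  assert (HFn1b : forall n x, (n >= N0)%nat -> Rabs (Fn1 n x) <= B + BV).
  { intros n x Hn'. unfold Fn1. assert (Rabs (conv (Gn1 n) (mn n) x) <= B).
    { rewrite <- (Rmult_1_r B), <- (Hmint n). apply conv_bound; auto; try (intro y; apply HBn1; auto). }
    specialize (HV1 x). apply Rabs_le_between in H0. apply Rabs_le_between in HV1. apply Rabs_le. lra. }
  assert (HFn2b : forall n x, (n >= N0)%nat -> Rabs (Fn2 n x) <= B + BV).
  { intros n x Hn'. unfold Fn2. assert (Rabs (conv (Gn2 n) (mn n) x) <= B).
    { rewrite <- (Rmult_1_r B), <- (Hmint n). apply conv_bound; auto; try (intro y; apply HBn2; auto). }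
    specialize (HV2 x). apply Rabs_le_between in H0. apply Rabs_le_between in HV2. apply Rabs_le. lra. }
  set (c1 := - b - 1). set (c2 := - b - 1 - 1).
  set (Rb := fun c => Rpower dl c + Rpower M c).
  assert (HRb : forall c, 0 < Rb c).
  { intro c. unfold Rb. assert (H1 := Rpower_pos dl c). assert (H2 := Rpower_pos M c). lra. }
  assert (HRF : forall c x, 0 < Rpower (F x) c <= Rb c).
  { intros c x. split. apply Rpower_pos. apply rp_le_sum; auto. }
  assert (Htail : forall c : R, exists N, forall n x, (n >= N)%nat -> dl <= Fn n x <= M).
  { intro c. exists N0. intros n x Hn'. apply Hbnd; auto. }
  assert (R1cv := ucv_rp Fn F c1 dl M HFcv Hdl HFb (Htail c1)).
  assert (R2cv := ucv_rp Fn F c2 dl M HFcv Hdl HFb (Htail c2)).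
  set (C := b * Rb c1 + (b + 1) * Rb c2 + (b + 1) * Rb c2 * (BG + BV) + Rb c1 + B + BV + BG).
  assert (HC1 : 0 < Rb c1) by apply HRb. assert (HC2 : 0 < Rb c2) by apply HRb.
  assert (HBpos : 0 <= B) by (unfold B; lra).
  assert (Hprod : 0 <= (b + 1) * Rb c2 * (BG + BV)).
  { apply Rmult_le_pos; [apply Rmult_le_pos|]; lra. }
  assert (HbR1 : b * Rb c1 >= 0) by (apply Rle_ge; apply Rmult_le_pos; lra).
  assert (HbR2 : (b + 1) * Rb c2 >= 0) by (apply Rle_ge; apply Rmult_le_pos; lra).
  assert (HC0 : 0 <= C) by (unfold C; lra).
  assert (TFn1 : exists N, forall n x, (n >= N)%nat -> Rabs (Fn1 n x) <= C).
  { exists N0. intros n x Hn'. specialize (HFn1b n x Hn'). unfold C. lra. }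
  assert (TFn2 : exists N, forall n x, (n >= N)%nat -> Rabs (Fn2 n x) <= C).
  { exists N0. intros n x Hn'. specialize (HFn2b n x Hn'). unfold C. lra. }
  assert (B1 : forall x, Rabs (- b * Rpower (F x) c1) <= C).
  { intro x. destruct (HRF c1 x). rewrite Rabs_mult, Rabs_Ropp, Rabs_right, Rabs_right by lra.
    assert (b * Rpower (F x) c1 <= b * Rb c1) by (apply Rmult_le_compat_l; lra). unfold C. lra. }
  assert (B2 : forall x, Rabs (c1 * Rpower (F x) c2) <= C).
  { intro x. destruct (HRF c2 x). unfold c1. rewrite Rabs_mult, Rabs_left, Rabs_right by lra.
    assert ((b + 1) * Rpower (F x) c2 <= (b + 1) * Rb c2) by (apply Rmult_le_compat_l; lra). unfold C. lra. }
  assert (B3 : forall x, Rabs (c1 * Rpower (F x) c2 * F1 x) <= C).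
  { intro x. destruct (HRF c2 x). unfold c1. rewrite Rabs_mult, Rabs_mult, Rabs_left, Rabs_right by lra.
    assert ((b + 1) * Rpower (F x) c2 <= (b + 1) * Rb c2) by (apply Rmult_le_compat_l; lra).
    assert (- (- b - 1) * Rpower (F x) c2 * Rabs (F1 x) <= (b + 1) * Rb c2 * (BG + BV)).
    { apply Rmult_le_compat. nra. apply Rabs_pos. lra. apply HF1b. }
    unfold C. lra. }
  assert (B4 : forall x, Rabs (Rpower (F x) c1) <= C).
  { intro x. destruct (HRF c1 x). rewrite Rabs_right by lra. unfold C. lra. }
  assert (u3 := ucv_scal (Rpower A b) _ _ (ucv_mult _ _ _ _ C (ucv_scal (- b) _ _ R1cv) HF1cv HC0 B1 TFn1)).
  assert (t3 := ucv_mult _ _ _ _ C (ucv_mult _ _ _ _ C (ucv_scal c1 _ _ R2cv) HF1cv HC0 B2 TFn1) HF1cv HC0 B3 TFn1).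
  assert (t4 := ucv_mult _ _ _ _ C R1cv HF2cv HC0 B4 TFn2).
  assert (t7 := ucv_scal (Rpower A b) _ _ (ucv_scal (- b) _ _ (ucv_plus _ _ _ _ t3 t4))).
  exists m, H. split; [|split; [|split]].
  - exists (md1 A b F F1), (md2 A b F F1 F2). exact HmC2.
  - exists (fun n => md1 A b (Fn n) (Fn1 n)), (fun n => md2 A b (Fn n) (Fn1 n) (Fn2 n)), (md1 A b F F1), (md2 A b F F1 F2).
    split; [exact HmnC2|]. split; [exact HmC2|]. split; [exact Hucv|]. split; [exact u3| exact t7].
  - exact HHcv.
  - split; [split; auto|]. split; auto. split.
    + apply ex_RInt_bridge; auto. apply ex_cont; auto.
    + intro x. exists (conv G m x). split.
      * apply ex_RInt_bridge; auto. apply conv_ex; auto.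
      * rewrite (Hmphi' x), <- Hbinv, phi_pow by auto.
        assert (HFx := HFpos' x). assert (0 < j ^ 2) by (apply pow2_gt_0; auto).
        unfold A, F. field. split; [unfold F in HFx; lra | auto].
Qed.
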